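(* For each $\delta\in(-1,1)$, the map $\Psi_\delta$ is continuous on $[0,1]^2$.
   Context: Fix a function $h:[0,\tfrac12)\to[0,\infty)$ which is weakly increasing, satisfies $h(r)=0$ for all $r\le\frac1{10}$, $h(r)\to\infty$ as $r\to\frac12$, and is thrice continuously differentiable with $(h'(r))^2=O((r+h(r))^3)$, $h''(r)h'(r)=O((r+h(r))^3)$, $h'''(r)=O((r+h(r))^2)$. Let $r_0\in(0,\frac12)$ be the unique solution of $2r_0h(r_0)+r_0^2=\frac14$, and define $\Theta(r)=\arccos\frac{h(r)}{h(r)+r}$ for $r\le r_0$ and $\Theta(r)=\arcsin\frac{1}{2(h(r)+r)}$ for $r>r_0$. The map $(r,\theta)\mapsto(x_1,x_2)$, $x_1=\frac12+(r+h(r))\sin(\theta\Theta(r))$, $x_2=(r+h(r))\cos(\theta\Theta(r))-h(r)$, is a bijection from $(0,\frac12)\times[-1,1]$ onto $[0,1]\times[0,\frac12)\setminus\{(\frac12,0)\}$; let $K$ denote its inverse. For $\delta\in(-1,1)$ and $r\in(0,\frac12)$, let $w_r(\theta)=1+h'(r)-h'(r)\cos(\theta\Theta(r))$ and let $g_r=g_{r,\delta}:[-1,1]\to[-1,1]$ be the unique increasing bijection with $(1+\delta)\int_{-1}^{\ell}w_r(\theta)\,d\theta=\int_{-1}^{g_r(\ell)}w_r(\theta)\,d\theta$ for $\ell\in[-1,0]$ and $(1-\delta)\int_{\ell}^{1}w_r(\theta)\,d\theta=\int_{g_r(\ell)}^{1}w_r(\theta)\,d\theta$ for $\ell\in[0,1]$.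 Define $\Psi_\delta:[0,1]^2\to[0,1]^2$ by: $\Psi_\delta(x)=K^{-1}(r,g_r(\theta))$ where $(r,\theta)=K(x)$, for $x\in[0,1]\times[0,\frac12)\setminus\{(\frac12,0)\}$; $\Psi_\delta(\frac12,0)=(\frac12,0)$; for $x_2>\frac12$, $\Psi_\delta(x_1,x_2)=(\Psi^1_\delta(x_1,1-x_2),\,1-\Psi^2_\delta(x_1,1-x_2))$ where $\Psi_\delta=(\Psi^1_\delta,\Psi^2_\delta)$; and on $x_2=\frac12$, $\Psi_\delta(x_1,\frac12)=((1+\delta)x_1,\frac12)$ for $x_1\le\frac12$ and $\Psi_\delta(x_1,\frac12)=(\frac{1+\delta}2+(1-\delta)(x_1-\frac12),\frac12)$ for $x_1\ge\frac12$. $\Psi_\delta$ is a bijection of $[0,1]^2$ fixing the boundary. *)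

(* Defs.v *)
From Stdlib Require Import Reals Lra ClassicalEpsilon.
Open Scope R_scope.

(* Riemann integral of f over [a,b] (value of RiemannInt for any
   integrability proof; 0 if f is not integrable -- never happens below). *)
Definition RInt (f : R -> R) (a b : R) : R :=
  epsilon (inhabits 0)
    (fun v => exists pr : Riemann_integrable f a b, RiemannInt pr = v).

Definition h_hyp (h h1 h2 h3 : R -> R) : Prop :=
  (forall r, 0 <= r < 1/2 -> 0 <= h r) /\
  (forall a b, 0 <= a <= b -> b < 1/2 -> h a <= h b) /\
  (forall r, 0 <= r <= 1/10 -> h r = 0) /\
  (forall M, exists e, 0 < e /\ forall r, 1/2 - e < r < 1/2 -> M < h r) /\
  (forall r, 0 < r < 1/2 ->
     derivable_pt_lim h r (h1 r) /\ derivable_pt_lim h1 r (h2 r) /\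
     derivable_pt_lim h2 r (h3 r) /\ continuity_pt h3 r) /\
  (exists C, forall r, 0 < r < 1/2 ->
     (h1 r)^2 <= C * (r + h r)^3 /\
     Rabs (h2 r * h1 r) <= C * (r + h r)^3 /\
     Rabs (h3 r) <= C * (r + h r)^2).

Definition r0 (h : R -> R) : R :=
  epsilon (inhabits 0)
    (fun r => 0 < r < 1/2 /\ 2 * r * h r + r ^ 2 = 1/4).

Definition Theta (h : R -> R) (r : R) : R :=
  if Rle_dec r (r0 h) then acos (h r / (h r + r))
  else asin (1 / (2 * (h r + r))).

Definition Kinv (h : R -> R) (p : R * R) : R * R :=
  let (r, th) := p in
  (1/2 + (r + h r) * sin (th * Theta h r),
   (r + h r) * cos (th * Theta h r) - h r).

Definition K (h : R -> R) (x : R * R) : R * R :=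
  epsilon (inhabits (0, 0))
    (fun p => 0 < fst p < 1/2 /\ -1 <= snd p <= 1 /\ Kinv h p = x).

Definition w (h h1 : R -> R) (r th : R) : R :=
  1 + h1 r - h1 r * cos (th * Theta h r).

Definition g (h h1 : R -> R) (delta r l : R) : R :=
  epsilon (inhabits 0)
    (fun y => -1 <= y <= 1 /\
      if Rle_dec l 0 then
        (1 + delta) * RInt (w h h1 r) (-1) l = RInt (w h h1 r) (-1) y
      else
        (1 - delta) * RInt (w h h1 r) l 1 = RInt (w h h1 r) y 1).

Definition Psi_low (h h1 : R -> R) (delta : R) (x : R * R) : R * R :=
  if Req_EM_T (fst x) (1/2) then
    (if Req_EM_T (snd x) 0 then (1/2, 0)
     else let p := K h x in Kinv h (fst p, g h h1 delta (fst p) (snd p)))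
  else let p := K h x in Kinv h (fst p, g h h1 delta (fst p) (snd p)).

Definition Psi (h h1 : R -> R) (delta : R) (x : R * R) : R * R :=
  let (x1, x2) := x in
  if Rlt_dec x2 (1/2) then Psi_low h h1 delta x
  else if Rlt_dec (1/2) x2 then
    let q := Psi_low h h1 delta (x1, 1 - x2) in (fst q, 1 - snd q)
  else if Rle_dec x1 (1/2) then ((1 + delta) * x1, 1/2)
  else ((1 + delta) / 2 + (1 - delta) * (x1 - 1/2), 1/2).

Definition in_square (x : R * R) : Prop :=
  0 <= fst x <= 1 /\ 0 <= snd x <= 1.

(* continuity of F restricted to D (max-norm on R^2, equivalent to Euclidean) *)
Definition continuous_on2 (F : R * R -> R * R) (D : R * R -> Prop) : Prop :=
  forall x, D x -> forall eps, 0 < eps -> exists d, 0 < d /\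
    forall y, D y -> Rabs (fst y - fst x) < d -> Rabs (snd y - snd x) < d ->
      Rabs (fst (F y) - fst (F x)) < eps /\ Rabs (snd (F y) - snd (F x)) < eps.

(* Main.v *)
Require Import Defs.
From Stdlib Require Import Reals Lra Psatz ClassicalEpsilon FunctionalExtensionality Ranalysis5.
Open Scope R_scope.


Definition C2 (D : R*R -> Prop) (f : R*R -> R) (p : R*R) : Prop :=
  forall eps, 0 < eps -> exists d, 0 < d /\ forall q, D q ->
    Rabs (fst q - fst p) < d -> Rabs (snd q - snd p) < d -> Rabs (f q - f p) < eps.

Lemma C2_const D c p : C2 D (fun _ => c) p.
Proof. intros e He; exists 1; split; [lra|]; intros.
  unfold Rminus; rewrite Rplus_opp_r, Rabs_R0; lra. Qed.

Lemma C2_fst D p : C2 D fst p.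
Proof. intros e He; exists e; split; auto. Qed.
Lemma C2_snd D p : C2 D snd p.
Proof. intros e He; exists e; split; auto. Qed.

Lemma C2_sub (D D' : R*R -> Prop) f p : (forall q, D' q -> D q) -> C2 D f p -> C2 D' f p.
Proof. intros HD H e He; destruct (H e He) as [d [Hd H1]]; exists d; split; auto. Qed.

Lemma C2_ext D f g p : (forall q, D q -> f q = g q) -> f p = g p -> C2 D f p -> C2 D g p.
Proof. intros Hq Hp H e He; destruct (H e He) as [d [Hd H1]]; exists d; split; auto.
  intros q Dq A B; rewrite <- Hq, <- Hp; auto. Qed.

Lemma C2_comp2 D D' G f1 f2 p : (forall q, D q -> D' (f1 q, f2 q)) ->
  C2 D' G (f1 p, f2 p) -> C2 D f1 p -> C2 D f2 p -> C2 D (fun q => G (f1 q, f2 q)) p.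
Proof.
  intros HD HG H1 H2 e He. destruct (HG e He) as [d [Hd HG']].
  destruct (H1 d Hd) as [d1 [Hd1 H1']]. destruct (H2 d Hd) as [d2 [Hd2 H2']].
  exists (Rmin d1 d2); split; [apply Rmin_pos; auto|].
  intros q Dq A B. apply (HG' (f1 q, f2 q) (HD q Dq)); simpl.
  - apply H1'; auto. eapply Rlt_le_trans; [apply A|apply Rmin_l].
    eapply Rlt_le_trans; [apply B|apply Rmin_l].
  - apply H2'; auto. eapply Rlt_le_trans; [apply A|apply Rmin_r].
    eapply Rlt_le_trans; [apply B|apply Rmin_r].
Qed.

Lemma cpt_eps g a : continuity_pt g a -> forall e, 0 < e -> exists d, 0 < d /\
  forall x, Rabs (x - a) < d -> Rabs (g x - g a) < e.
Proof.
  intros H e He. destruct (H e He) as [d [Hd H1]]. exists d; split; auto.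
  intros x Hx. destruct (Req_dec x a) as [->|Hne].
  - unfold Rminus; rewrite Rplus_opp_r, Rabs_R0; lra.
  - apply (H1 x). unfold D_x, no_cond; simpl; unfold R_dist. repeat split; auto.
Qed.

Lemma C2_comp1 D g f p : continuity_pt g (f p) -> C2 D f p -> C2 D (fun q => g (f q)) p.
Proof.
  intros Hg Hf.
  apply (C2_comp2 D (fun _ => True) (fun q => g (fst q)) f f p); auto.
  intros e He. destruct (cpt_eps g (f p) Hg e He) as [d [Hd H]].
  exists d; split; auto.
Qed.

Lemma C2_plus D f g p : C2 D f p -> C2 D g p -> C2 D (fun q => f q + g q) p.
Proof.
  intros Hf Hg e He. destruct (Hf (e/2)) as [d1 [Hd1 H1]]; [lra|].
  destruct (Hg (e/2)) as [d2 [Hd2 H2]]; [lra|].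
  exists (Rmin d1 d2); split; [apply Rmin_pos; auto|].
  intros q Dq Hx Hy.
  assert (A1 := H1 q Dq (Rlt_le_trans _ _ _ Hx (Rmin_l _ _)) (Rlt_le_trans _ _ _ Hy (Rmin_l _ _))).
  assert (A2 := H2 q Dq (Rlt_le_trans _ _ _ Hx (Rmin_r _ _)) (Rlt_le_trans _ _ _ Hy (Rmin_r _ _))).
  replace (f q + g q - (f p + g p)) with ((f q - f p) + (g q - g p)) by ring.
  eapply Rle_lt_trans; [apply Rabs_triang|]. lra.
Qed.

Lemma C2_opp D f p : C2 D f p -> C2 D (fun q => - f q) p.
Proof.
  intros Hf e He. destruct (Hf e He) as [d [Hd H]]. exists d; split; auto.
  intros q Dq A B. replace (- f q - - f p) with (- (f q - f p)) by ring.
  rewrite Rabs_Ropp; auto.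
Qed.

Lemma C2_minus D f g p : C2 D f p -> C2 D g p -> C2 D (fun q => f q - g q) p.
Proof. intros; apply C2_plus; auto; apply C2_opp; auto. Qed.

Lemma mult_jc a b : C2 (fun _ => True) (fun q => fst q * snd q) (a, b).
Proof.
  intros e He. set (K := Rabs a + Rabs b + 2).
  assert (HK : 0 < K) by (unfold K; pose proof (Rabs_pos a); pose proof (Rabs_pos b); lra).
  exists (Rmin 1 (e / K)); split.
  { apply Rmin_pos; [lra|]. apply Rdiv_lt_0_compat; auto. }
  intros [x y] _ A B; simpl in *.
  assert (d1 : Rmin 1 (e/K) <= 1) by apply Rmin_l.
  assert (d2 : Rmin 1 (e/K) <= e/K) by apply Rmin_r.
  set (d := Rmin 1 (e/K)) in *.
  assert (dK : d * K <= e) by (apply (Rmult_le_compat_r K) in d2; [|lra];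
     unfold Rdiv in d2; rewrite Rmult_assoc, Rinv_l in d2; lra).
  replace (x*y - a*b) with ((x-a)*(y-b) + (x-a)*b + a*(y-b)) by ring.
  eapply Rle_lt_trans; [apply Rabs_triang|].
  eapply Rle_lt_trans; [apply Rplus_le_compat_r; apply Rabs_triang|].
  rewrite !Rabs_mult.
  pose proof (Rabs_pos (x-a)); pose proof (Rabs_pos (y-b));
  pose proof (Rabs_pos a); pose proof (Rabs_pos b).
  unfold K in dK. nra.
Qed.

Lemma C2_mult D f g p : C2 D f p -> C2 D g p -> C2 D (fun q => f q * g q) p.
Proof.
  intros Hf Hg.
  apply (C2_comp2 D (fun _ => True) (fun q => fst q * snd q) f g p); auto.
  apply mult_jc.
Qed.

Lemma C2_inv D f p : f p <> 0 -> C2 D f p -> C2 D (fun q => / f q) p.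
Proof.
  intros Hn Hf. apply (C2_comp1 D Rinv f p); auto.
  apply continuity_pt_inv; auto. apply derivable_continuous_pt, derivable_pt_id.
Qed.

Lemma C2_div D f g p : g p <> 0 -> C2 D f p -> C2 D g p -> C2 D (fun q => f q / g q) p.
Proof. intros; unfold Rdiv; apply C2_mult; auto; apply C2_inv; auto. Qed.

Lemma C2_sin D f p : C2 D f p -> C2 D (fun q => sin (f q)) p.
Proof. intros; apply C2_comp1; auto; apply continuity_sin. Qed.
Lemma C2_cos D f p : C2 D f p -> C2 D (fun q => cos (f q)) p.
Proof. intros; apply C2_comp1; auto; apply continuity_cos. Qed.

Lemma C2_abs D f p : C2 D f p -> C2 D (fun q => Rabs (f q)) p.
Proof.
  intros Hf e He. destruct (Hf e He) as [d [Hd H]]. exists d; split; auto.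
  intros q Dq A B. eapply Rle_lt_trans; [apply Rabs_triang_inv2|]. auto.
Qed.

Lemma Rmin_formula a b : Rmin a b = (a + b - Rabs (a - b)) / 2.
Proof. unfold Rmin; destruct (Rle_dec a b).
  - rewrite Rabs_left1 by lra; field.
  - rewrite Rabs_right by lra; field. Qed.

Lemma C2_min D f g p : C2 D f p -> C2 D g p -> C2 D (fun q => Rmin (f q) (g q)) p.
Proof.
  intros Hf Hg. apply (C2_ext D (fun q => (f q + g q - Rabs (f q - g q)) * / 2)).
  { intros; rewrite Rmin_formula; reflexivity. }
  { rewrite Rmin_formula; reflexivity. }
  apply C2_mult; [|apply C2_const].
  apply C2_minus; [apply C2_plus; auto|]. apply C2_abs, C2_minus; auto.
Qed.

Lemma C2_glue D F F1 F2 p d0 : 0 < d0 ->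
  (forall q, D q -> Rabs (fst q - fst p) < d0 -> Rabs (snd q - snd p) < d0 ->
     F q = F1 q \/ F q = F2 q) ->
  F1 p = F p -> F2 p = F p -> C2 D F1 p -> C2 D F2 p -> C2 D F p.
Proof.
  intros Hd0 Hq E1 E2 H1 H2 e He.
  destruct (H1 e He) as [d1 [Hd1 A1]]. destruct (H2 e He) as [d2 [Hd2 A2]].
  exists (Rmin d0 (Rmin d1 d2)); split.
  { repeat apply Rmin_pos; auto. }
  intros q Dq A B.
  assert (a0 : Rabs (fst q - fst p) < d0) by (eapply Rlt_le_trans; [apply A|apply Rmin_l]).
  assert (b0 : Rabs (snd q - snd p) < d0) by (eapply Rlt_le_trans; [apply B|apply Rmin_l]).
  assert (a1 : Rabs (fst q - fst p) < d1) by (eapply Rlt_le_trans; [apply A|];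
     eapply Rle_trans; [apply Rmin_r|apply Rmin_l]).
  assert (b1 : Rabs (snd q - snd p) < d1) by (eapply Rlt_le_trans; [apply B|];
     eapply Rle_trans; [apply Rmin_r|apply Rmin_l]).
  assert (a2 : Rabs (fst q - fst p) < d2) by (eapply Rlt_le_trans; [apply A|];
     eapply Rle_trans; [apply Rmin_r|apply Rmin_r]).
  assert (b2 : Rabs (snd q - snd p) < d2) by (eapply Rlt_le_trans; [apply B|];
     eapply Rle_trans; [apply Rmin_r|apply Rmin_r]).
  destruct (Hq q Dq a0 b0) as [-> | ->].
  - rewrite <- E1; auto.
  - rewrite <- E2; auto.
Qed.

Lemma C2_implicit (D : R*R -> Prop) (I : R -> Prop) (F : R*R -> R -> R) (tau s : R*R -> R) p :
  D p ->
  (forall a b c, I a -> I c -> a <= b <= c -> I b) ->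
  (forall q, D q -> I (s q)) ->
  (forall q, D q -> F q (s q) = tau q) ->
  (forall q t, D q -> I t -> t < s q -> F q t < tau q) ->
  (forall q t, D q -> I t -> s q < t -> tau q < F q t) ->
  (forall t, I t -> C2 D (fun q => F q t) p) -> C2 D tau p -> C2 D s p.
Proof.
  intros Dp Iconv Is Fs Flt Fgt HF Htau e He.
  set (t1 := s p + e). set (t0 := s p - e).
  assert (U : exists d, 0 < d /\ forall q, D q -> Rabs (fst q - fst p) < d ->
              Rabs (snd q - snd p) < d -> s q < t1).
  { destruct (classic (I t1)) as [It|Nt].
    - assert (g0 : tau p < F p t1) by (apply (Fgt p t1 Dp It); unfold t1; lra).
      set (gap := F p t1 - tau p).
      destruct (HF t1 It (gap/2)) as [d1 [Hd1 A1]]; [unfold gap; lra|].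
      destruct (Htau (gap/2)) as [d2 [Hd2 A2]]; [unfold gap; lra|].
      exists (Rmin d1 d2); split; [apply Rmin_pos; auto|].
      intros q Dq A B.
      assert (X1 := A1 q Dq (Rlt_le_trans _ _ _ A (Rmin_l _ _)) (Rlt_le_trans _ _ _ B (Rmin_l _ _))).
      assert (X2 := A2 q Dq (Rlt_le_trans _ _ _ A (Rmin_r _ _)) (Rlt_le_trans _ _ _ B (Rmin_r _ _))).
      simpl in X1.
      apply Rabs_def2 in X1. apply Rabs_def2 in X2.
      assert (tq : tau q < F q t1) by (unfold gap in *; lra).
      destruct (Rlt_le_dec (s q) t1) as [ok|bad]; auto.
      destruct (Rle_lt_or_eq_dec _ _ bad) as [lt|eq].
      + exfalso. assert (Y := Flt q t1 Dq It lt). lra.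
      + exfalso. rewrite eq in tq. rewrite Fs in tq; auto. lra.
    - exists 1; split; [lra|]. intros q Dq _ _.
      destruct (Rlt_le_dec (s q) t1) as [ok|bad]; auto.
      exfalso; apply Nt. apply (Iconv (s p) t1 (s q)); [auto|auto|unfold t1 in *; split; lra]. }
  assert (L : exists d, 0 < d /\ forall q, D q -> Rabs (fst q - fst p) < d ->
              Rabs (snd q - snd p) < d -> t0 < s q).
  { destruct (classic (I t0)) as [It|Nt].
    - assert (g0 : F p t0 < tau p) by (apply (Flt p t0 Dp It); unfold t0; lra).
      set (gap := tau p - F p t0).
      destruct (HF t0 It (gap/2)) as [d1 [Hd1 A1]]; [unfold gap; lra|].
      destruct (Htau (gap/2)) as [d2 [Hd2 A2]]; [unfold gap; lra|].
      exists (Rmin d1 d2); split; [apply Rmin_pos; auto|].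
      intros q Dq A B.
      assert (X1 := A1 q Dq (Rlt_le_trans _ _ _ A (Rmin_l _ _)) (Rlt_le_trans _ _ _ B (Rmin_l _ _))).
      assert (X2 := A2 q Dq (Rlt_le_trans _ _ _ A (Rmin_r _ _)) (Rlt_le_trans _ _ _ B (Rmin_r _ _))).
      simpl in X1.
      apply Rabs_def2 in X1. apply Rabs_def2 in X2.
      assert (tq : F q t0 < tau q) by (unfold gap in *; lra).
      destruct (Rlt_le_dec t0 (s q)) as [ok|bad]; auto.
      destruct (Rle_lt_or_eq_dec _ _ bad) as [lt|eq].
      + exfalso. assert (Y := Fgt q t0 Dq It lt). lra.
      + exfalso. rewrite <- eq in tq. rewrite Fs in tq; auto. lra.
    - exists 1; split; [lra|]. intros q Dq _ _.
      destruct (Rlt_le_dec t0 (s q)) as [ok|bad]; auto.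
      exfalso; apply Nt. apply (Iconv (s q) t0 (s p)); [auto|auto|unfold t0 in *; split; lra]. }
  destruct U as [d1 [Hd1 U]]. destruct L as [d2 [Hd2 L]].
  exists (Rmin d1 d2); split; [apply Rmin_pos; auto|].
  intros q Dq A B.
  assert (X1 := U q Dq (Rlt_le_trans _ _ _ A (Rmin_l _ _)) (Rlt_le_trans _ _ _ B (Rmin_l _ _))).
  assert (X2 := L q Dq (Rlt_le_trans _ _ _ A (Rmin_r _ _)) (Rlt_le_trans _ _ _ B (Rmin_r _ _))).
  unfold t0, t1 in *. apply Rabs_def1; lra.
Qed.


Section HS.
Variables h h1 h2 h3 : R -> R.
Hypothesis H : h_hyp h h1 h2 h3.

Lemma h_nn r : 0 <= r < 1/2 -> 0 <= h r.
Proof. destruct H as [A _]; auto. Qed.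
Lemma h_mono a b : 0 <= a <= b -> b < 1/2 -> h a <= h b.
Proof. destruct H as [_ [A _]]; auto. Qed.
Lemma h_zero r : 0 <= r <= 1/10 -> h r = 0.
Proof. destruct H as [_ [_ [A _]]]; auto. Qed.
Lemma h_inf M : exists e, 0 < e /\ forall r, 1/2 - e < r < 1/2 -> M < h r.
Proof. destruct H as [_ [_ [_ [A _]]]]; auto. Qed.
Lemma h_der r : 0 < r < 1/2 -> derivable_pt_lim h r (h1 r).
Proof. destruct H as [_ [_ [_ [_ [A _]]]]]; intros; apply A; auto. Qed.
Lemma h1_der r : 0 < r < 1/2 -> derivable_pt_lim h1 r (h2 r).
Proof. destruct H as [_ [_ [_ [_ [A _]]]]]; intros; apply A; auto. Qed.
Lemma h_bound : exists C, 0 <= C /\ forall r, 0 < r < 1/2 -> (h1 r)^2 <= C * (r + h r)^3.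
Proof. destruct H as [_ [_ [_ [_ [_ [C HC]]]]]]. exists (Rabs C); split; [apply Rabs_pos|].
  intros r Hr. destruct (HC r Hr) as [A _]. eapply Rle_trans; [apply A|].
  apply Rmult_le_compat_r; [|apply RRle_abs].
  assert (0 <= h r) by (apply h_nn; lra). apply pow_le; lra. Qed.

Lemma h_cont r : 0 < r < 1/2 -> continuity_pt h r.
Proof. intros Hr. apply derivable_continuous_pt. exists (h1 r). apply h_der; auto. Qed.
Lemma h1_cont r : 0 < r < 1/2 -> continuity_pt h1 r.
Proof. intros Hr. apply derivable_continuous_pt. exists (h2 r). apply h1_der; auto. Qed.

Lemma h1_nn r : 0 < r < 1/2 -> 0 <= h1 r.
Proof.
  intros Hr. destruct (Rle_or_lt 0 (h1 r)) as [ok|neg]; auto. exfalso.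
  assert (D := h_der r Hr). destruct (D (- h1 r / 2)) as [d Hd]; [lra|].
  set (k := Rmin (d/2) ((1/2 - r)/2)).
  assert (k0 : 0 < k) by (unfold k; apply Rmin_pos; [destruct d; simpl; lra|lra]).
  assert (kd : k < d) by (unfold k; destruct d as [d dp]; simpl; eapply Rle_lt_trans; [apply Rmin_l|lra]).
  assert (kr : k <= (1/2 - r)/2) by (unfold k; apply Rmin_r).
  assert (A := Hd k (Rgt_not_eq _ _ k0) (ltac:(rewrite Rabs_right; lra))).
  assert (Hm : h r <= h (r + k)) by (apply h_mono; lra).
  assert (Q : 0 <= (h (r + k) - h r) / k) by (unfold Rdiv; apply Rmult_le_pos; [lra| left; apply Rinv_0_lt_compat; lra]).
  apply Rabs_def2 in A. lra.
Qed.

Definition phi r := 2 * r * h r + r ^ 2.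

Lemma r0_spec : 0 < r0 h < 1/2 /\ 2 * r0 h * h (r0 h) + r0 h ^ 2 = 1/4.
Proof.
  unfold r0. apply epsilon_spec.
  destruct (h_inf 1) as [e [He Hr]].
  set (b := Rmax (1/4) (1/2 - e/2)).
  assert (b1 : 1/4 <= b) by apply Rmax_l.
  assert (b2 : 1/2 - e/2 <= b) by apply Rmax_r.
  assert (b3 : b < 1/2) by (unfold b; apply Rmax_lub_lt; lra).
  assert (hb : 1 < h b) by (apply Hr; lra).
  destruct (IVT_interv (fun r => 2 * r * h r + r ^ 2 - 1/4) (1/10) b) as [z [Hz Ez]].
  - intros a Ha. apply continuity_pt_minus; [|apply continuity_pt_const; intros ? ?; auto].
    apply continuity_pt_plus.
    + apply continuity_pt_mult; [|apply h_cont; lra].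
      apply continuity_pt_mult; [apply continuity_pt_const; intros ? ?; auto|].
      apply derivable_continuous_pt, derivable_pt_id.
    + apply derivable_continuous_pt. apply derivable_pt_pow.
  - lra.
  - simpl. rewrite h_zero by lra. lra.
  - simpl. nra.
  - exists z. split; [lra|]. simpl in Ez. lra.
Qed.

Lemma r0_bounds : 0 < r0 h < 1/2.
Proof. apply r0_spec. Qed.
Lemma r0_eq : 2 * r0 h * h (r0 h) + r0 h ^ 2 = 1/4.
Proof. apply r0_spec. Qed.

Lemma h_r0_pos : 0 < h (r0 h).
Proof.
  pose proof r0_bounds; pose proof r0_eq.
  assert (0 <= h (r0 h)) by (apply h_nn; lra).
  destruct (Rle_lt_or_eq_dec _ _ H2); auto. rewrite <- e in H1. nra.
Qed.

Lemma phi_le r : 0 < r -> r <= r0 h -> 2 * r * h r + r ^ 2 <= 1/4.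
Proof.
  intros. pose proof r0_bounds; pose proof r0_eq.
  assert (h r <= h (r0 h)) by (apply h_mono; lra).
  assert (0 <= h r) by (apply h_nn; lra). nra.
Qed.

Lemma phi_gt r : r0 h < r -> r < 1/2 -> 1/4 < 2 * r * h r + r ^ 2.
Proof.
  intros. pose proof r0_bounds; pose proof r0_eq.
  assert (h (r0 h) <= h r) by (apply h_mono; lra).
  assert (0 <= h (r0 h)) by (apply h_nn; lra). nra.
Qed.

End HS.


Lemma asin_nonneg x : 0 <= x <= 1 -> 0 <= asin x.
Proof.
  intros Hx. destruct (Rle_or_lt 0 (asin x)) as [ok|neg]; auto. exfalso.
  pose proof (asin_bound x). pose proof PI_RGT_0.
  assert (sin (asin x) < 0) by (apply sin_lt_0_var; lra).
  rewrite sin_asin in H1 by lra. lra.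
Qed.

Lemma asin_pos x : 0 < x <= 1 -> 0 < asin x.
Proof.
  intros Hx. destruct (Rle_lt_or_eq_dec _ _ (asin_nonneg x ltac:(lra))) as [ok|eq]; auto.
  exfalso. assert (E : sin (asin x) = sin 0) by (rewrite <- eq; auto).
  rewrite sin_asin, sin_0 in E by lra. lra.
Qed.

Lemma asin_lt x : 0 <= x < 1 -> asin x < PI/2.
Proof.
  intros Hx. destruct (Rle_lt_or_eq_dec _ _ (proj2 (asin_bound x))) as [ok|eq]; auto.
  exfalso. assert (E : sin (asin x) = sin (PI/2)) by (rewrite eq; auto).
  rewrite sin_asin, sin_PI2 in E by lra. lra.
Qed.

Lemma Rsqr_pow2 x : x² = x ^ 2.
Proof. unfold Rsqr; ring. Qed.

Definition Dr (q : R*R) : Prop := 0 < fst q < 1/2.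

Section HS.
Variables h h1 h2 h3 : R -> R.
Hypothesis H : h_hyp h h1 h2 h3.

Lemma Theta_left r : r <= r0 h -> Theta h r = acos (h r / (h r + r)).
Proof. intros; unfold Theta; destruct (Rle_dec r (r0 h)); [auto|lra]. Qed.
Lemma Theta_right r : r0 h < r -> Theta h r = asin (1 / (2 * (h r + r))).
Proof. intros; unfold Theta; destruct (Rle_dec r (r0 h)); [lra|auto]. Qed.

Lemma c_range r : 0 < r < 1/2 -> 0 <= h r / (h r + r) < 1.
Proof.
  intros Hr. assert (0 <= h r) by (apply (h_nn h h1 h2 h3 H); lra).
  split. unfold Rdiv; apply Rmult_le_pos; [lra| left; apply Rinv_0_lt_compat; lra].
  apply Rmult_lt_reg_r with (h r + r); [lra|]. unfold Rdiv.
  rewrite Rmult_assoc, Rinv_l by lra. lra.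
Qed.

Lemma right_R r : r0 h < r < 1/2 -> 1 < 2 * (h r + r).
Proof.
  intros Hr. pose proof (r0_bounds h h1 h2 h3 H).
  assert (0 <= h r) by (apply (h_nn h h1 h2 h3 H); lra).
  assert (P := phi_gt h h1 h2 h3 H r ltac:(lra) ltac:(lra)). nra.
Qed.

Lemma r0_R : 1 < 2 * (h (r0 h) + r0 h).
Proof.
  pose proof (r0_bounds h h1 h2 h3 H). pose proof (r0_eq h h1 h2 h3 H).
  pose proof (h_r0_pos h h1 h2 h3 H). nra.
Qed.

Lemma inv_range x : 1 < x -> 0 < 1 / x < 1.
Proof. intros. split. apply Rdiv_lt_0_compat; lra.
  apply Rmult_lt_reg_r with x; [lra|]. unfold Rdiv. rewrite Rmult_assoc, Rinv_l by lra. lra. Qed.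

Lemma Theta_bounds r : 0 < r < 1/2 -> 0 < Theta h r <= PI/2.
Proof.
  intros Hr. unfold Theta. destruct (Rle_dec r (r0 h)).
  - pose proof (c_range r Hr). rewrite acos_asin by lra.
    pose proof (asin_lt _ H0). pose proof (asin_nonneg (h r / (h r + r)) ltac:(lra)). lra.
  - assert (X := inv_range _ (right_R r ltac:(lra))).
    pose proof (asin_pos (1 / (2 * (h r + r))) ltac:(lra)). pose proof (asin_bound (1 / (2 * (h r + r)))). lra.
Qed.

Lemma Theta_cos_left r : 0 < r < 1/2 -> r <= r0 h -> cos (Theta h r) = h r / (h r + r).
Proof. intros. rewrite Theta_left by auto. pose proof (c_range r H0). apply cos_acos; lra. Qed.

Lemma Theta_sin_left r : 0 < r < 1/2 -> r <= r0 h ->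
  sin (Theta h r) = sqrt (1 - (h r / (h r + r)) ^ 2).
Proof. intros. rewrite Theta_left by auto. pose proof (c_range r H0).
  rewrite sin_acos by lra. rewrite Rsqr_pow2; auto. Qed.

Lemma Theta_sin_right r : r0 h < r < 1/2 -> sin (Theta h r) = 1 / (2 * (h r + r)).
Proof. intros. rewrite Theta_right by lra. assert (X := inv_range _ (right_R r H0)).
  apply sin_asin; lra. Qed.

Lemma C2_h D p : 0 < fst p < 1/2 -> C2 D (fun q => h (fst q)) p.
Proof. intros; apply C2_comp1; [apply (h_cont h h1 h2 h3 H); auto|apply C2_fst]. Qed.
Lemma C2_h1 D p : 0 < fst p < 1/2 -> C2 D (fun q => h1 (fst q)) p.
Proof. intros; apply C2_comp1; [apply (h1_cont h h1 h2 h3 H); auto|apply C2_fst]. Qed.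

Lemma C2_F1 p : 0 < fst p < 1/2 ->
  C2 Dr (fun q => acos (h (fst q) / (h (fst q) + fst q))) p.
Proof.
  intros Hp. pose proof (c_range _ Hp). assert (0 <= h (fst p)) by (apply (h_nn h h1 h2 h3 H); lra).
  apply C2_comp1. apply derivable_continuous_pt, derivable_pt_acos; lra.
  apply C2_div; [lra| apply C2_h; auto|]. apply C2_plus; [apply C2_h; auto|apply C2_fst].
Qed.

Lemma C2_F2 p : 0 < fst p < 1/2 -> 1 < 2 * (h (fst p) + fst p) ->
  C2 Dr (fun q => asin (1 / (2 * (h (fst q) + fst q)))) p.
Proof.
  intros Hp Hq. pose proof (inv_range _ Hq).
  apply C2_comp1. apply derivable_continuous_pt, derivable_pt_asin; lra.
  apply C2_div; [lra| apply C2_const|]. apply C2_mult; [apply C2_const|].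
  apply C2_plus; [apply C2_h; auto|apply C2_fst].
Qed.

Lemma Theta_r0_eq : acos (h (r0 h) / (h (r0 h) + r0 h)) = asin (1 / (2 * (h (r0 h) + r0 h))).
Proof.
  pose proof (r0_bounds h h1 h2 h3 H). pose proof (r0_eq h h1 h2 h3 H).
  pose proof (h_r0_pos h h1 h2 h3 H).
  set (a := acos (h (r0 h) / (h (r0 h) + r0 h))).
  pose proof (c_range (r0 h) H0).
  assert (Ha : 0 <= a <= PI/2).
  { unfold a. rewrite acos_asin by lra. pose proof (asin_lt _ H3).
    pose proof (asin_nonneg (h (r0 h) / (h (r0 h) + r0 h)) ltac:(lra)). lra. }
  assert (Hs : sin a = 1 / (2 * (h (r0 h) + r0 h))).
  { unfold a. rewrite sin_acos by lra. rewrite Rsqr_pow2.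
    set (R0 := h (r0 h) + r0 h). set (h0 := h (r0 h)) in *.
    assert (R0p : 0 < R0) by (unfold R0; lra).
    replace (1 - (h0 / R0) ^ 2) with ((1 / (2 * R0)) ^ 2).
    - rewrite sqrt_pow2; auto. apply Rlt_le, Rdiv_lt_0_compat; lra.
    - assert (E : R0 ^ 2 = h0 ^ 2 + 1/4) by (unfold R0, h0 in *; nra).
      assert (E2 : 1 = (h0 ^ 2 + 1/4) / R0 ^ 2) by (rewrite <- E; field; lra).
      rewrite E2 at 2. field. lra. }
  rewrite <- Hs. rewrite asin_sin; auto. pose proof PI_RGT_0; lra.
Qed.

Lemma C2_Theta p : 0 < fst p < 1/2 -> C2 Dr (fun q => Theta h (fst q)) p.
Proof.
  intros Hp. pose proof (r0_bounds h h1 h2 h3 H).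
  destruct (Rlt_or_le (fst p) (r0 h)) as [lt|le].
  - apply (C2_glue Dr _ (fun q => acos (h (fst q) / (h (fst q) + fst q)))
                        (fun q => acos (h (fst q) / (h (fst q) + fst q))) p (r0 h - fst p)); try lra.
    + intros q Dq A _. left. apply Theta_left. apply Rabs_def2 in A; lra.
    + rewrite Theta_left; auto; lra.
    + rewrite Theta_left; auto; lra.
    + apply C2_F1; auto.
    + apply C2_F1; auto.
  - destruct (Rle_lt_or_eq_dec _ _ le) as [gt|eq].
    + apply (C2_glue Dr _ (fun q => asin (1 / (2 * (h (fst q) + fst q))))
                        (fun q => asin (1 / (2 * (h (fst q) + fst q)))) p (fst p - r0 h)); try lra.
      * intros q Dq A _. left. apply Theta_right. apply Rabs_def2 in A; lra.
      * rewrite Theta_right; auto.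
      * rewrite Theta_right; auto.
      * apply C2_F2; auto. apply right_R; lra.
      * apply C2_F2; auto. apply right_R; lra.
    + apply (C2_glue Dr _ (fun q => acos (h (fst q) / (h (fst q) + fst q)))
                        (fun q => asin (1 / (2 * (h (fst q) + fst q)))) p 1); try lra.
      * intros q Dq _ _. destruct (Rle_or_lt (fst q) (r0 h)).
        left; apply Theta_left; auto. right; apply Theta_right; auto.
      * rewrite Theta_left; auto; lra.
      * rewrite Theta_left by lra. rewrite <- eq. symmetry; apply Theta_r0_eq.
      * apply C2_F1; auto.
      * apply C2_F2; auto. rewrite <- eq. apply r0_R.
Qed.

End HS.


Lemma dpl_ext f g x l l' : (forall y, f y = g y) -> l = l' -> derivable_pt_lim f x l -> derivable_pt_lim g x l'.
Proof. intros E El D. replace g with f by (apply functional_extensionality; auto). subst; auto. Qed.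

Lemma dpl_lin c x : derivable_pt_lim (fun a => a * c) x c.
Proof.
  assert (X := derivable_pt_lim_mult id (fct_cte c) x 1 0 (derivable_pt_lim_id x) (derivable_pt_lim_const c x)).
  eapply dpl_ext; [| |exact X]. intros; unfold mult_fct, id, fct_cte; reflexivity.
  unfold id, fct_cte; ring.
Qed.

Lemma dpl_sin_lin c x : derivable_pt_lim (fun a => sin (a * c)) x (c * cos (x * c)).
Proof.
  assert (X := derivable_pt_lim_comp (fun a => a * c) sin x c (cos (x * c)) (dpl_lin c x) (derivable_pt_lim_sin _)).
  eapply dpl_ext; [| |exact X]. intros; unfold comp; reflexivity. ring.
Qed.

Lemma dpl_plus f g x l1 l2 : derivable_pt_lim f x l1 -> derivable_pt_lim g x l2 ->
  derivable_pt_lim (fun y => f y + g y) x (l1 + l2).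
Proof. intros A B. eapply dpl_ext; [| |exact (derivable_pt_lim_plus f g x l1 l2 A B)].
  intros; unfold plus_fct; reflexivity. reflexivity. Qed.

Lemma dpl_scal f c x l : derivable_pt_lim f x l -> derivable_pt_lim (fun y => c * f y) x (c * l).
Proof. intros A. eapply dpl_ext; [| |exact (derivable_pt_lim_scal f c x l A)].
  intros; unfold mult_real_fct; reflexivity. reflexivity. Qed.

Lemma dpl_const c x : derivable_pt_lim (fun _ => c) x 0.
Proof. exact (derivable_pt_lim_const c x). Qed.

Lemma sin_lip x y : Rabs (sin x - sin y) <= Rabs (x - y).
Proof.
  destruct (MVT_abs sin cos y x) as [c [E _]].
  { intros; apply derivable_pt_lim_sin. }
  rewrite E. rewrite <- (Rmult_1_l (Rabs (x - y))) at 2.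
  apply Rmult_le_compat_r; [apply Rabs_pos|]. pose proof (COS_bound c).
  apply Rabs_le; lra.
Qed.

Lemma sin_cubic_pos x : 0 <= x <= PI -> 0 <= x - sin x <= x ^ 3 / 6.
Proof.
  intros Hx. destruct (sin_bound x 0 (proj1 Hx) (proj2 Hx)) as [A _].
  unfold sin_approx, sin_term in A. simpl in A.
  split.
  - destruct (Rle_lt_or_eq_dec _ _ (proj1 Hx)) as [lt|eq].
    + pose proof (sin_lt_x x lt); lra.
    + subst; rewrite sin_0; lra.
  - lra.
Qed.

Lemma sin_cubic x : Rabs x <= PI -> Rabs (sin x - x) <= Rabs x ^ 3 / 6.
Proof.
  intros Hx. destruct (Rle_or_lt 0 x).
  - rewrite (Rabs_right x) in * by lra. pose proof (sin_cubic_pos x ltac:(lra)).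
    rewrite Rabs_left1 by lra. lra.
  - rewrite (Rabs_left x) in * by lra. pose proof (sin_cubic_pos (-x) ltac:(lra)).
    rewrite sin_neg in H0. rewrite Rabs_right by lra. lra.
Qed.

Lemma RInt_FTC (f F : R -> R) a b : (forall x, derivable_pt_lim F x (f x)) -> continuity f ->
  RInt f a b = F b - F a.
Proof.
  intros HD Hc.
  set (dF := (fun x => exist (fun l => derivable_pt_abs F x l) (f x) (HD x)) : derivable F).
  assert (Hc' : continuity (derive F dF)) by exact Hc.
  set (CF := {| c1 := F; diff0 := dF; cont1 := Hc' |}).
  assert (pr : Riemann_integrable f a b).
  { destruct (Rle_dec a b).
    - apply continuity_implies_RiemannInt; auto.
    - apply RiemannInt_P1. apply continuity_implies_RiemannInt; [lra|auto]. }
  assert (E : RiemannInt pr = F b - F a) by exact (@FTC_Riemann CF a b pr).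
  unfold RInt.
  assert (Ex : exists v, exists pr : Riemann_integrable f a b, RiemannInt pr = v) by (exists (F b - F a); exists pr; auto).
  destruct (epsilon_spec (inhabits 0) _ Ex) as [pr' E'].
  rewrite <- E'. rewrite (RiemannInt_P5 pr' pr). auto.
Qed.

Definition Wf (h h1 : R -> R) (r a : R) : R :=
  (a + 1) * (1 + h1 r) - h1 r * (sin (a * Theta h r) + sin (Theta h r)) / Theta h r.

Definition Tf (h h1 : R -> R) (delta r l : R) : R :=
  Wf h h1 r l + delta * Rmin (Wf h h1 r l) (Wf h h1 r 1 - Wf h h1 r l).

Lemma Wf_der h h1 r x : Theta h r <> 0 -> derivable_pt_lim (Wf h h1 r) x (w h h1 r x).
Proof.
  intros Hn. unfold Wf, w. set (A := 1 + h1 r). set (B := h1 r). set (T := Theta h r).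
  assert (X1 : derivable_pt_lim (fun a => (a + 1) * A) x A).
  { eapply dpl_ext; [| |exact (dpl_plus _ _ x _ _ (dpl_lin A x) (dpl_const A x))].
    intros; cbv beta; ring. ring. }
  assert (X2 := dpl_scal _ (- (B / T)) x _ (dpl_plus _ _ x _ _ (dpl_sin_lin T x) (dpl_const (sin T) x))).
  eapply dpl_ext; [| |exact (dpl_plus _ _ x _ _ X1 X2)].
  intros; simpl; field; auto. unfold A, B; field; auto.
Qed.

Lemma w_cont h h1 r : continuity (w h h1 r).
Proof.
  intros x. unfold w. apply continuity_pt_minus; [apply continuity_pt_const; intros ? ?; auto|].
  apply continuity_pt_mult; [apply continuity_pt_const; intros ? ?; auto|].
  apply (continuity_pt_comp (fun a => a * Theta h r) cos); [|apply continuity_cos].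
  apply derivable_continuous_pt. exists (Theta h r). apply dpl_lin.
Qed.

Lemma RInt_w h h1 r a b : Theta h r <> 0 -> RInt (w h h1 r) a b = Wf h h1 r b - Wf h h1 r a.
Proof. intros. apply RInt_FTC; [intros; apply Wf_der; auto| apply w_cont]. Qed.

Lemma Wf_m1 h h1 r : Theta h r <> 0 -> Wf h h1 r (-1) = 0.
Proof. intros; unfold Wf. replace (-1 * Theta h r) with (- Theta h r) by ring.
  rewrite sin_neg. field; auto. Qed.

Lemma Wf_1 h h1 r : Theta h r <> 0 -> Wf h h1 r 1 = 2 * Wf h h1 r 0.
Proof. intros; unfold Wf. rewrite Rmult_1_l, Rmult_0_l, sin_0. field; auto. Qed.

Lemma Wf_mono h h1 r a b : 0 < Theta h r -> 0 <= h1 r -> a <= b -> b - a <= Wf h h1 r b - Wf h h1 r a.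
Proof.
  intros Ht Hb Hab. unfold Wf. set (T := Theta h r) in *. set (B := h1 r) in *.
  assert (S : sin (b * T) - sin (a * T) <= (b - a) * T).
  { pose proof (sin_lip (b*T) (a*T)). pose proof (Rle_abs (sin (b * T) - sin (a * T))).
    rewrite (Rabs_right (b * T - a * T)) in H by nra. lra. }
  assert (E : (b + 1) * (1 + B) - B * (sin (b * T) + sin T) / T - ((a + 1) * (1 + B) - B * (sin (a * T) + sin T) / T)
     = (b - a) + B * ((b - a) - (sin (b * T) - sin (a * T)) / T)) by (field; lra).
  rewrite E. assert (0 <= (b - a) - (sin (b * T) - sin (a * T)) / T).
  { apply Rmult_le_reg_r with T; auto. rewrite Rmult_0_l. unfold Rdiv.
    rewrite Rmult_minus_distr_r, Rmult_assoc, Rinv_l by lra. lra. }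
  nra.
Qed.

Lemma Wf_cont h h1 r x : Theta h r <> 0 -> continuity_pt (Wf h h1 r) x.
Proof. intros. apply derivable_continuous_pt. exists (w h h1 r x). apply Wf_der; auto. Qed.


Definition Dg (q : R*R) : Prop := 0 < fst q < 1/2 /\ -1 <= snd q <= 1.

Section HS.
Variables h h1 h2 h3 : R -> R.
Hypothesis H : h_hyp h h1 h2 h3.
Variable delta : R.
Hypothesis Hd : -1 < delta < 1.

Lemma Theta_ne r : 0 < r < 1/2 -> Theta h r <> 0.
Proof. intros; pose proof (Theta_bounds h h1 h2 h3 H r H0); lra. Qed.

Lemma Wf_range r l : 0 < r < 1/2 -> -1 <= l <= 1 ->
  0 <= Wf h h1 r l <= Wf h h1 r 1.
Proof.
  intros Hr Hl. pose proof (Theta_bounds h h1 h2 h3 H r Hr). pose proof (h1_nn h h1 h2 h3 H r Hr).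
  pose proof (Wf_mono h h1 r (-1) l ltac:(lra) H1 ltac:(lra)).
  pose proof (Wf_mono h h1 r l 1 ltac:(lra) H1 ltac:(lra)).
  rewrite Wf_m1 in H2 by lra. lra.
Qed.

Lemma Tf_range r l : 0 < r < 1/2 -> -1 <= l <= 1 ->
  0 <= Tf h h1 delta r l <= Wf h h1 r 1.
Proof.
  intros Hr Hl. pose proof (Wf_range r l Hr Hl). unfold Tf.
  set (a := Wf h h1 r l) in *. set (b := Wf h h1 r 1 - a).
  assert (m1 : Rmin a b <= a) by apply Rmin_l.
  assert (m2 : Rmin a b <= b) by apply Rmin_r.
  assert (m0 : 0 <= Rmin a b) by (apply Rmin_glb; unfold b; lra).
  unfold b in *. split; nra.
Qed.

Lemma g_iff r l y : 0 < r < 1/2 -> -1 <= l <= 1 ->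
  ((if Rle_dec l 0 then
        (1 + delta) * RInt (w h h1 r) (-1) l = RInt (w h h1 r) (-1) y
      else
        (1 - delta) * RInt (w h h1 r) l 1 = RInt (w h h1 r) y 1)
   <-> Wf h h1 r y = Tf h h1 delta r l).
Proof.
  intros Hr Hl. assert (Tn := Theta_ne r Hr).
  pose proof (Theta_bounds h h1 h2 h3 H r Hr). pose proof (h1_nn h h1 h2 h3 H r Hr).
  rewrite !RInt_w by auto. rewrite Wf_m1 by auto.
  assert (W1 := Wf_1 h h1 r Tn). unfold Tf.
  destruct (Rle_dec l 0).
  - pose proof (Wf_mono h h1 r l 0 ltac:(lra) H1 r0).
    rewrite Rmin_left by lra. split; intros; lra.
  - pose proof (Wf_mono h h1 r 0 l ltac:(lra) H1 ltac:(lra)).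
    rewrite Rmin_right by lra. split; intros; lra.
Qed.

Lemma g_spec r l : 0 < r < 1/2 -> -1 <= l <= 1 ->
  -1 <= g h h1 delta r l <= 1 /\ Wf h h1 r (g h h1 delta r l) = Tf h h1 delta r l.
Proof.
  intros Hr Hl. unfold g.
  set (P := fun y => -1 <= y <= 1 /\
      (if Rle_dec l 0 then
        (1 + delta) * RInt (w h h1 r) (-1) l = RInt (w h h1 r) (-1) y
      else
        (1 - delta) * RInt (w h h1 r) l 1 = RInt (w h h1 r) y 1)).
  assert (Ex : exists y, P y).
  { assert (Tn := Theta_ne r Hr). pose proof (Tf_range r l Hr Hl).
    set (T := Tf h h1 delta r l) in *.
    assert (E : exists y, -1 <= y <= 1 /\ Wf h h1 r y = T).
    { destruct (Rle_lt_or_eq_dec _ _ (proj1 H0)) as [T0|T0].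
      - destruct (Rle_lt_or_eq_dec _ _ (proj2 H0)) as [T1|T1].
        + destruct (IVT_interv (fun y => Wf h h1 r y - T) (-1) 1) as [z [Hz Ez]].
          * intros. apply continuity_pt_minus; [apply Wf_cont; auto|apply continuity_pt_const; intros ? ?; auto].
          * lra.
          * rewrite Wf_m1 by auto. lra.
          * lra.
          * exists z; split; auto. lra.
        + exists 1; split; [lra|auto].
      - exists (-1); split; [lra|]. rewrite Wf_m1; auto. }
    destruct E as [y [Hy Ey]]. exists y. split; auto. apply g_iff; auto. }
  destruct (epsilon_spec (inhabits 0) P Ex) as [A B].
  split; auto. apply g_iff; auto.
Qed.

Definition Wq (q : R*R) := Wf h h1 (fst q) (snd q).

Lemma C2_Wq D p : (forall q, D q -> Dr q) -> 0 < fst p < 1/2 -> C2 D Wq p.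
Proof.
  intros HD Hp. apply (C2_sub Dr); auto.
  assert (Th := C2_Theta h h1 h2 h3 H p Hp).
  assert (Tn := Theta_ne (fst p) Hp).
  unfold Wq, Wf.
  apply C2_minus.
  - apply C2_mult. apply C2_plus; [apply C2_snd|apply C2_const].
    apply C2_plus; [apply C2_const|apply (C2_h1 h h1 h2 h3 H); auto].
  - apply C2_div; auto.
    + apply C2_mult; [apply (C2_h1 h h1 h2 h3 H); auto|].
      apply C2_plus; apply C2_sin; auto. apply C2_mult; [apply C2_snd|auto].
Qed.

Definition gq (q : R*R) := g h h1 delta (fst q) (snd q).

Lemma C2_g p : Dg p -> C2 Dg gq p.
Proof.
  intros Dp.
  assert (Dsub : forall q, Dg q -> Dr q) by (intros q HQ; unfold Dg in HQ; apply HQ).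
  apply (C2_implicit Dg (fun t => -1 <= t <= 1) (fun q t => Wq (fst q, t))
            (fun q => Tf h h1 delta (fst q) (snd q))).
  - exact Dp.
  - intros a b c A B C; lra.
  - intros q HQ; unfold Dg in HQ; destruct HQ as [A B]. apply (g_spec _ _ A B).
  - intros q HQ; unfold Dg in HQ; destruct HQ as [A B]. apply (g_spec _ _ A B).
  - intros q t HQ It lt; unfold Dg in HQ; destruct HQ as [A B]. destruct (g_spec _ _ A B) as [G1 G2].
    unfold Wq; simpl. rewrite <- G2. 
    pose proof (Wf_mono h h1 (fst q) t (gq q) (proj1 (Theta_bounds h h1 h2 h3 H _ A)) (h1_nn h h1 h2 h3 H _ A) ltac:(lra)).
    unfold gq in *. lra.
  - intros q t HQ It lt; unfold Dg in HQ; destruct HQ as [A B]. destruct (g_spec _ _ A B) as [G1 G2].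
    unfold Wq; simpl. rewrite <- G2.
    pose proof (Wf_mono h h1 (fst q) (gq q) t (proj1 (Theta_bounds h h1 h2 h3 H _ A)) (h1_nn h h1 h2 h3 H _ A) ltac:(lra)).
    unfold gq in *. lra.
  - intros t It. apply (C2_comp2 Dg Dr Wq fst (fun _ => t)).
    + intros q HQ; unfold Dg in HQ; apply HQ.
    + apply C2_Wq; [auto|]. simpl; apply Dp.
    + apply C2_fst.
    + apply C2_const.
  - unfold Tf. unfold Dg in Dp; destruct Dp as [Dp1 Dp2].
    assert (W1 : C2 Dg (fun q => Wq q) p) by (apply C2_Wq; auto).
    assert (W2 : C2 Dg (fun q => Wq (fst q, 1)) p).
    { apply (C2_comp2 Dg Dr Wq fst (fun _ => 1)).
      + intros q HQ; unfold Dg in HQ; apply HQ.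
      + apply C2_Wq; [auto|]. simpl; auto.
      + apply C2_fst.
      + apply C2_const. }
    unfold Wq in W1, W2; simpl in W2.
    apply C2_plus; auto. apply C2_mult; [apply C2_const|]. apply C2_min; auto.
    apply C2_minus; auto.
Qed.

End HS.


Definition Dstar (q : R*R) : Prop :=
  (0 <= fst q <= 1 /\ 0 <= snd q < 1/2) /\ ~ (fst q = 1/2 /\ snd q = 0).

Section HS.
Variables h h1 h2 h3 : R -> R.
Hypothesis H : h_hyp h h1 h2 h3.

Definition Qf (r : R) (y : R*R) := (r + h r) ^ 2 - (snd y + h r) ^ 2 - (fst y - 1/2) ^ 2.

Lemma sqrt_sq_eq x y : 0 <= y -> x = y ^ 2 -> sqrt x = y.
Proof. intros Hy ->. apply sqrt_pow2; auto. Qed.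

Lemma K_exists y : Dstar y -> exists p, 0 < fst p < 1/2 /\ -1 <= snd p <= 1 /\ Kinv h p = y.
Proof.
  intros [[[Y1 Y1'] [Y2 Y2']] Yn]. destruct y as [y1 y2]; simpl in *.
  set (u := y1 - 1/2).
  assert (Hu : Rabs u <= 1/2) by (apply Rabs_le; unfold u; lra).
  assert (Hpos : 0 < y2 + Rabs u).
  { destruct (Rle_lt_or_eq_dec _ _ Y2) as [lt|eq].
    - pose proof (Rabs_pos u); lra.
    - destruct (Req_dec u 0) as [u0|u0].
      + exfalso; apply Yn; split; unfold u in u0; lra.
      + pose proof (Rabs_pos_lt u u0); lra. }
  set (a := Rmin (1/20) ((y2 + Rabs u)/2)).
  assert (a1 : a <= 1/20) by apply Rmin_l.
  assert (a2 : a <= (y2 + Rabs u)/2) by apply Rmin_r.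
  assert (a0 : 0 < a) by (unfold a; apply Rmin_pos; lra).
  set (m := (1/2 - y2)/2).
  assert (m0 : 0 < m) by (unfold m; lra).
  destruct (h_inf h h1 h2 h3 H (1/(8*m))) as [e [He Hinf]].
  set (b := Rmax ((y2 + 1/2)/2) (1/2 - e/2)).
  assert (b1 : (y2 + 1/2)/2 <= b) by apply Rmax_l.
  assert (b2 : 1/2 - e/2 <= b) by apply Rmax_r.
  assert (b3 : b < 1/2) by (unfold b; apply Rmax_lub_lt; lra).
  assert (hb : 1/(8*m) < h b) by (apply Hinf; lra).
  assert (hb' : 1/4 < 2 * m * h b).
  { apply (Rmult_lt_compat_l (2*m)) in hb; [|lra].
    replace (2 * m * (1 / (8 * m))) with (1/4) in hb by (field; lra). lra. }
  assert (u2 : u ^ 2 <= 1/4) by (pose proof (Rabs_pos u); rewrite <- (pow2_abs u); nra).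
  destruct (IVT_interv (fun t => Qf t (y1, y2)) a b) as [z [Hz Ez]].
  - intros t Ht. unfold Qf; simpl.
    assert (ch : continuity_pt h t) by (apply (h_cont h h1 h2 h3 H); lra).
    repeat first [ apply continuity_pt_minus | apply continuity_pt_plus | apply continuity_pt_mult
                 | apply continuity_pt_const; intros ? ?; reflexivity | exact ch
                 | apply derivable_continuous_pt, derivable_pt_id ].
  - lra.
  - unfold Qf; simpl. rewrite (h_zero h h1 h2 h3 H a) by lra.
    pose proof (Rabs_pos u). fold u.
    assert (Rabs u * Rabs u = u * u) by (rewrite <- Rabs_mult; apply Rabs_right; nra).
    assert (a * a <= ((y2 + Rabs u)/2) * ((y2 + Rabs u)/2)) by (apply Rmult_le_compat; lra).
    assert (P2 : 0 < (y2 + Rabs u) * (y2 + Rabs u)) by (apply Rmult_lt_0_compat; lra).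
    assert (2 * y2 * Rabs u <= y2 * y2 + u * u).
    { assert (0 <= (y2 - Rabs u) * (y2 - Rabs u)) by apply Rle_0_sqr. nra. }
    lra.
  - unfold Qf; simpl. assert (0 < 1/(8*m)) by (apply Rdiv_lt_0_compat; lra). assert (0 <= h b) by lra. fold u.
    assert (bm : m <= b - y2) by (unfold m; lra).
    assert (0 <= (b - y2 - m) * h b) by (apply Rmult_le_pos; lra).
    assert (0 <= (b - y2) * (b + y2)) by (apply Rmult_le_pos; lra).
    replace (u * (u * 1)) with (u ^ 2) by ring. nra.
  - simpl in Ez. unfold Qf in Ez; simpl in Ez. fold u in Ez.
    assert (z0 : 0 < z < 1/2) by lra.
    assert (hz : 0 <= h z) by (apply (h_nn h h1 h2 h3 H); lra).
    set (R := z + h z) in *.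
    assert (R0 : 0 < R) by (unfold R; lra).
    pose proof (Theta_bounds h h1 h2 h3 H z z0) as TB.
    set (T := Theta h z) in *.
    assert (uR : -1 <= u / R <= 1).
    { assert ((u/R)^2 <= 1).
      { replace ((u/R)^2) with (u^2 / R^2) by (field; lra).
        apply (Rmult_le_reg_r (R^2)); [nra|]. unfold Rdiv; rewrite Rmult_assoc, Rinv_l by nra. nra. }
      split; nra. }
    set (ph := asin (u / R)).
    assert (sph : sin ph = u / R) by (apply sin_asin; auto).
    assert (ab : Rabs u / R <= sin T).
    { destruct (Rle_or_lt z (r0 h)) as [le|gt].
      - unfold T; rewrite (Theta_sin_left h h1 h2 h3 H z z0 le).
        replace (Rabs u / R) with (sqrt ((Rabs u / R) ^ 2)).
        2:{ apply sqrt_pow2. apply Rmult_le_pos; [apply Rabs_pos|left; apply Rinv_0_lt_compat; auto]. }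
        apply sqrt_le_1_alt. replace (h z + z) with R by (unfold R; ring).
        replace ((Rabs u / R)^2) with (u^2/R^2) by (rewrite <- (pow2_abs u); field; lra).
        replace ((h z / R)^2) with (h z ^2 / R^2) by (field; lra).
        apply (Rmult_le_reg_r (R^2)); [nra|].
        replace ((1 - h z ^ 2 / R ^ 2) * R ^ 2) with (R^2 - h z ^2) by (field; lra).
        unfold Rdiv; rewrite Rmult_assoc, Rinv_l by nra. nra.
      - unfold T; rewrite (Theta_sin_right h h1 h2 h3 H z ltac:(lra)).
        replace (h z + z) with R by (unfold R; ring).
        unfold Rdiv. rewrite !Rmult_1_l, Rinv_mult.
        apply Rmult_le_compat_r; [left; apply Rinv_0_lt_compat; auto|]. lra. }
    assert (php : Rabs ph <= T).
    { pose proof (asin_bound (u/R)). fold ph in H0.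
      apply Rabs_le. split.
      - destruct (Rle_or_lt (-T) ph) as [ok|bad]; auto. exfalso.
        assert (sin ph < sin (-T)) by (apply sin_increasing_1; lra).
        rewrite sin_neg, sph in H1. pose proof (Rle_abs (-u)). rewrite Rabs_Ropp in H2.
        assert (- u / R <= Rabs u / R) by (unfold Rdiv; apply Rmult_le_compat_r; [left; apply Rinv_0_lt_compat|]; lra).
        replace (-u/R) with (-(u/R)) in H3 by (field; lra). lra.
      - destruct (Rle_or_lt ph T) as [ok|bad]; auto. exfalso.
        assert (sin T < sin ph) by (apply sin_increasing_1; lra).
        rewrite sph in H1. pose proof (Rle_abs u).
        assert (u / R <= Rabs u / R) by (unfold Rdiv; apply Rmult_le_compat_r; [left; apply Rinv_0_lt_compat|]; lra).
        lra. }
    exists (z, ph / T). simpl. split; [auto|]. split.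
    { assert (-T <= ph <= T) by (pose proof (Rle_abs ph); pose proof (Rle_abs (-ph)); rewrite Rabs_Ropp in *; lra).
      split.
      - apply (Rmult_le_reg_r T); [lra|]. unfold Rdiv; rewrite Rmult_assoc, Rinv_l by lra. lra.
      - apply (Rmult_le_reg_r T); [lra|]. unfold Rdiv; rewrite Rmult_assoc, Rinv_l by lra. lra. }
    fold T. replace (ph / T * T) with ph by (field; lra).
    fold R. f_equal.
    + rewrite sph. unfold u; field; lra.
    + unfold ph. rewrite cos_asin by auto. rewrite Rsqr_pow2.
      rewrite (sqrt_sq_eq _ ((y2 + h z)/R)).
      * field; lra.
      * apply Rmult_le_pos; [lra|left; apply Rinv_0_lt_compat; auto].
      * replace ((u/R)^2) with (u^2/R^2) by (field; lra).
        replace (((y2 + h z)/R)^2) with ((y2 + h z)^2/R^2) by (field; lra).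
        apply (Rmult_eq_reg_r (R^2)); [|nra].
        replace ((1 - u ^ 2 / R ^ 2) * R ^ 2) with (R^2 - u^2) by (field; lra).
        unfold Rdiv; rewrite Rmult_assoc, Rinv_l by nra. lra.
Qed.

Lemma K_spec y : Dstar y -> 0 < fst (K h y) < 1/2 /\ -1 <= snd (K h y) <= 1 /\ Kinv h (K h y) = y.
Proof. intros Dy. unfold K. apply epsilon_spec. apply K_exists; auto. Qed.

Definition rK y := fst (K h y).
Definition tK y := snd (K h y).

Lemma K_eqs y : Dstar y ->
  1/2 + (rK y + h (rK y)) * sin (tK y * Theta h (rK y)) = fst y /\
  (rK y + h (rK y)) * cos (tK y * Theta h (rK y)) - h (rK y) = snd y.
Proof.
  intros Dy. destruct (K_spec y Dy) as [_ [_ E]]. unfold rK, tK.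
  destruct (K h y) as [r t]. simpl in *. rewrite <- E. simpl. auto.
Qed.

Lemma rK_range y : Dstar y -> 0 < rK y < 1/2.
Proof. intros; apply K_spec; auto. Qed.
Lemma tK_range y : Dstar y -> -1 <= tK y <= 1.
Proof. intros; apply K_spec; auto. Qed.

Lemma Qf_rK y : Dstar y -> Qf (rK y) y = 0.
Proof.
  intros Dy. destruct (K_eqs y Dy) as [E1 E2]. unfold Qf.
  rewrite <- E1. replace (snd y + h (rK y)) with ((rK y + h (rK y)) * cos (tK y * Theta h (rK y))) by lra.
  set (R := rK y + h (rK y)). set (c := tK y * Theta h (rK y)).
  pose proof (sin2_cos2 c). unfold Rsqr in H0. nra.
Qed.

Lemma rK_ge y : Dstar y -> snd y <= rK y.
Proof.
  intros Dy. pose proof (Qf_rK y Dy). unfold Qf in H0. pose proof (rK_range y Dy).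
  destruct Dy as [[_ [Y2 _]] _].
  assert (0 <= h (rK y)) by (apply (h_nn h h1 h2 h3 H); lra).
  destruct (Rle_or_lt (snd y) (rK y)); auto.
  assert (0 < (snd y - rK y) * (snd y + rK y + 2 * h (rK y))) by (apply Rmult_lt_0_compat; lra).
  pose proof (pow2_ge_0 (fst y - 1/2)). nra.
Qed.

Lemma Qf_sign y t : Dstar y -> 0 < t < 1/2 ->
  (t < rK y -> Qf t y < 0) /\ (rK y < t -> 0 < Qf t y).
Proof.
  intros Dy Ht. pose proof (Qf_rK y Dy). pose proof (rK_ge y Dy). pose proof (rK_range y Dy).
  unfold Qf in *. set (r := rK y) in *. destruct Dy as [[_ [Y2 _]] _].
  assert (hr : 0 <= h r) by (apply (h_nn h h1 h2 h3 H); lra).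
  assert (ht : 0 <= h t) by (apply (h_nn h h1 h2 h3 H); lra).
  set (u := fst y - 1/2) in *. set (y2 := snd y) in *.
  assert (F : forall s, (s + h s)^2 - (y2 + h s)^2 - u^2 = (s - y2) * (s + y2 + 2 * h s) - u^2) by (intros; ring).
  rewrite F in *. split; intros lt.
  - assert (hm : h t <= h r) by (apply (h_mono h h1 h2 h3 H); lra).
    destruct (Rle_or_lt t y2).
    + destruct (Rle_lt_or_eq_dec _ _ H1) as [rl|re].
      * assert (0 < (r - y2) * (r + y2 + 2 * h r)) by (apply Rmult_lt_0_compat; lra).
        assert (0 <= (y2 - t) * (t + y2 + 2 * h t)) by (apply Rmult_le_pos; lra).
        assert ((t - y2) * (t + y2 + 2 * h t) = - ((y2 - t) * (t + y2 + 2 * h t))) by ring. lra.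
      * assert (0 < (y2 - t) * (t + y2 + 2 * h t)) by (apply Rmult_lt_0_compat; lra).
        assert ((t - y2) * (t + y2 + 2 * h t) = - ((y2 - t) * (t + y2 + 2 * h t))) by ring.
        pose proof (pow2_ge_0 u). lra.
    + assert ((t - y2) * (t + y2 + 2 * h t) < (r - y2) * (r + y2 + 2 * h r)).
      { apply Rlt_le_trans with ((r - y2) * (t + y2 + 2 * h t)).
        apply Rmult_lt_compat_r; lra. apply Rmult_le_compat_l; lra. }
      lra.
  - assert (hm : h r <= h t) by (apply (h_mono h h1 h2 h3 H); lra).
    assert ((r - y2) * (r + y2 + 2 * h r) < (t - y2) * (t + y2 + 2 * h t)).
    { apply Rle_lt_trans with ((r - y2) * (t + y2 + 2 * h t)).
      apply Rmult_le_compat_l; lra. apply Rmult_lt_compat_r; lra. }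
    lra.
Qed.

Lemma C2_rK p : Dstar p -> C2 Dstar rK p.
Proof.
  intros Dp.
  apply (C2_implicit Dstar (fun t => 0 < t < 1/2) (fun q t => Qf t q) (fun _ => 0)).
  - exact Dp.
  - intros a b c A B C; lra.
  - intros; apply rK_range; auto.
  - intros; apply Qf_rK; auto.
  - intros q t Dq It lt. apply (Qf_sign q t Dq It); auto.
  - intros q t Dq It lt. apply (Qf_sign q t Dq It); auto.
  - intros t It. unfold Qf.
    apply C2_minus; [apply C2_minus|].
    + apply C2_const.
    + apply C2_mult; [apply C2_plus; [apply C2_snd|apply C2_const]|].
      apply C2_mult; [apply C2_plus; [apply C2_snd|apply C2_const]|apply C2_const].
    + apply C2_mult; [apply C2_minus; [apply C2_fst|apply C2_const]|].
      apply C2_mult; [apply C2_minus; [apply C2_fst|apply C2_const]|apply C2_const].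
  - apply C2_const.
Qed.

Definition Sf (q : R*R) : R := (fst q + h (fst q)) * sin (snd q * Theta h (fst q)).

Lemma C2_Sf_t t p : 0 < fst p < 1/2 -> C2 Dr (fun q => (fst q + h (fst q)) * sin (t * Theta h (fst q))) p.
Proof.
  intros Hp. apply C2_mult. apply C2_plus; [apply C2_fst|apply (C2_h h h1 h2 h3 H); auto].
  apply C2_sin. apply C2_mult; [apply C2_const|apply (C2_Theta h h1 h2 h3 H); auto].
Qed.

Lemma C2_tK p : Dstar p -> C2 Dstar tK p.
Proof.
  intros Dp.
  apply (C2_implicit Dstar (fun t => -1 <= t <= 1)
     (fun q t => (rK q + h (rK q)) * sin (t * Theta h (rK q))) (fun q => fst q - 1/2)).
  - exact Dp.
  - intros a b c A B C; lra.
  - intros; apply tK_range; auto.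
  - intros q Dq. destruct (K_eqs q Dq). lra.
  - intros q t Dq It lt. destruct (K_eqs q Dq) as [E _].
    pose proof (rK_range q Dq). pose proof (tK_range q Dq).
    pose proof (Theta_bounds h h1 h2 h3 H _ H0).
    assert (0 <= h (rK q)) by (apply (h_nn h h1 h2 h3 H); lra).
    assert (sin (t * Theta h (rK q)) < sin (tK q * Theta h (rK q))).
    { apply sin_increasing_1; nra. }
    nra.
  - intros q t Dq It lt. destruct (K_eqs q Dq) as [E _].
    pose proof (rK_range q Dq). pose proof (tK_range q Dq).
    pose proof (Theta_bounds h h1 h2 h3 H _ H0).
    assert (0 <= h (rK q)) by (apply (h_nn h h1 h2 h3 H); lra).
    assert (sin (tK q * Theta h (rK q)) < sin (t * Theta h (rK q))).
    { apply sin_increasing_1; nra. }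
    nra.
  - intros t It.
    apply (C2_comp2 Dstar Dr (fun q => (fst q + h (fst q)) * sin (t * Theta h (fst q))) rK (fun _ => 0)).
    + intros q Dq; unfold Dr; simpl; apply rK_range; auto.
    + apply C2_Sf_t. simpl. apply rK_range; auto.
    + apply C2_rK; auto.
    + apply C2_const.
  - apply C2_minus; [apply C2_fst|apply C2_const].
Qed.

End HS.


Definition Dlow (q : R*R) : Prop := 0 <= fst q <= 1 /\ 0 <= snd q < 1/2.

Lemma C2_local (D D' : R*R -> Prop) f p :
  (exists d0, 0 < d0 /\ forall q, D q -> Rabs (fst q - fst p) < d0 -> Rabs (snd q - snd p) < d0 -> D' q) ->
  C2 D' f p -> C2 D f p.
Proof.
  intros [d0 [Hd0 HD]] Hf e He. destruct (Hf e He) as [d [Hd A]].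
  exists (Rmin d0 d); split; [apply Rmin_pos; auto|].
  intros q Dq X Y. apply A.
  - apply HD; auto. eapply Rlt_le_trans; [apply X|apply Rmin_l]. eapply Rlt_le_trans; [apply Y|apply Rmin_l].
  - eapply Rlt_le_trans; [apply X|apply Rmin_r].
  - eapply Rlt_le_trans; [apply Y|apply Rmin_r].
Qed.

Section HS.
Variables h h1 h2 h3 : R -> R.
Hypothesis H : h_hyp h h1 h2 h3.
Variable delta : R.
Hypothesis Hd : -1 < delta < 1.

Definition gK y := g h h1 delta (rK h y) (tK h y).
Definition P1 y := 1/2 + (rK h y + h (rK h y)) * sin (gK y * Theta h (rK h y)).
Definition P2 y := (rK h y + h (rK h y)) * cos (gK y * Theta h (rK h y)) - h (rK h y).

Lemma Psi_low_eq y : Dstar y -> Psi_low h h1 delta y = (P1 y, P2 y).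
Proof.
  intros Dy. unfold Psi_low, P1, P2, gK, rK, tK.
  destruct (Req_EM_T (fst y) (1/2)); [destruct (Req_EM_T (snd y) 0)|].
  - exfalso; apply (proj2 Dy); auto.
  - reflexivity.
  - reflexivity.
Qed.

Lemma C2_rKh p : Dstar p -> C2 Dstar (fun q => h (rK h q)) p.
Proof. intros Dp. apply C2_comp1; [apply (h_cont h h1 h2 h3 H); apply (rK_range h h1 h2 h3 H); auto|apply (C2_rK h h1 h2 h3 H); auto]. Qed.

Lemma C2_ThK p : Dstar p -> C2 Dstar (fun q => Theta h (rK h q)) p.
Proof.
  intros Dp. apply (C2_comp2 Dstar Dr (fun q => Theta h (fst q)) (rK h) (fun _ => 0)).
  - intros q Dq; unfold Dr; simpl; apply (rK_range h h1 h2 h3 H); auto.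
  - apply (C2_Theta h h1 h2 h3 H). simpl; apply (rK_range h h1 h2 h3 H); auto.
  - apply (C2_rK h h1 h2 h3 H); auto.
  - apply C2_const.
Qed.

Lemma C2_gK p : Dstar p -> C2 Dstar gK p.
Proof.
  intros Dp. unfold gK.
  apply (C2_comp2 Dstar Dg (gq h h1 delta) (rK h) (tK h)).
  - intros q Dq; unfold Dg; simpl. split; [apply (rK_range h h1 h2 h3 H)|apply (tK_range h h1 h2 h3 H)]; auto.
  - apply (C2_g h h1 h2 h3 H delta Hd). unfold Dg; simpl. split; [apply (rK_range h h1 h2 h3 H)|apply (tK_range h h1 h2 h3 H)]; auto.
  - apply (C2_rK h h1 h2 h3 H); auto.
  - apply (C2_tK h h1 h2 h3 H); auto.
Qed.

Lemma C2_P1 p : Dstar p -> C2 Dstar P1 p.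
Proof.
  intros Dp. unfold P1. apply C2_plus; [apply C2_const|].
  apply C2_mult. apply C2_plus; [apply (C2_rK h h1 h2 h3 H); auto|apply C2_rKh; auto].
  apply C2_sin, C2_mult; [apply C2_gK; auto|apply C2_ThK; auto].
Qed.

Lemma C2_P2 p : Dstar p -> C2 Dstar P2 p.
Proof.
  intros Dp. unfold P2. apply C2_minus; [|apply C2_rKh; auto].
  apply C2_mult. apply C2_plus; [apply (C2_rK h h1 h2 h3 H); auto|apply C2_rKh; auto].
  apply C2_cos, C2_mult; [apply C2_gK; auto|apply C2_ThK; auto].
Qed.

Lemma Dlow_star_near p : Dlow p -> ~ (fst p = 1/2 /\ snd p = 0) ->
  exists d0, 0 < d0 /\ forall q, Dlow q -> Rabs (fst q - fst p) < d0 -> Rabs (snd q - snd p) < d0 -> Dstar q.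
Proof.
  intros Dp Np. exists (Rmax (Rabs (fst p - 1/2)) (snd p)). split.
  - destruct (Req_dec (fst p) (1/2)).
    + assert (snd p <> 0) by tauto. eapply Rlt_le_trans; [|apply Rmax_r]. destruct Dp; lra.
    + eapply Rlt_le_trans; [|apply Rmax_l]. apply Rabs_pos_lt; lra.
  - intros q Dq A B. split; [exact Dq|]. intros [E1 E2].
    rewrite E1, E2 in *. rewrite Rabs_minus_sym in A.
    destruct Dp as [_ [P2' _]]. rewrite Rabs_left1 in B by lra.
    destruct (Rle_or_lt (Rabs (fst p - 1/2)) (snd p)).
    + rewrite Rmax_right in * by auto. lra.
    + rewrite Rmax_left in * by lra. lra.
Qed.

Lemma small_rK q : Dstar q -> Rabs (fst q - 1/2) < 1/30 -> Rabs (snd q - 0) < 1/30 ->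
  h (rK h q) = 0 /\ 0 < rK h q <= Rabs (fst q - 1/2) + snd q.
Proof.
  intros Dq A B. pose proof (rK_range h h1 h2 h3 H q Dq) as Rr.
  pose proof (Qf_rK h h1 h2 h3 H q Dq) as Q0.
  destruct Dq as [[[Y1 Y1'] [Y2 Y2']] Yn] eqn:EDq.
  rewrite Rminus_0_r, Rabs_right in B by lra.
  assert (Hle : rK h q <= 1/15).
  { destruct (Rle_or_lt (rK h q) (1/15)) as [ok|bad]; auto. exfalso.
    destruct (Qf_sign h h1 h2 h3 H q (1/15) Dq ltac:(lra)) as [X _].
    specialize (X bad). unfold Qf in X. rewrite (h_zero h h1 h2 h3 H) in X by lra.
    pose proof (Rabs_pos (fst q - 1/2)).
    assert ((fst q - 1/2)^2 <= (1/30)^2) by (rewrite <- pow2_abs; apply pow_incr; lra).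
    assert (snd q ^2 <= (1/30)^2) by (apply pow_incr; lra). nra. }
  assert (h0 : h (rK h q) = 0) by (apply (h_zero h h1 h2 h3 H); lra).
  split; auto. split; [lra|].
  unfold Qf in Q0. rewrite h0 in Q0.
  pose proof (Rabs_pos (fst q - 1/2)).
  assert (E : rK h q ^ 2 <= (Rabs (fst q - 1/2) + snd q) ^ 2).
  { rewrite <- (pow2_abs (fst q - 1/2)) in Q0. nra. }
  destruct (Rle_or_lt (rK h q) (Rabs (fst q - 1/2) + snd q)) as [ok|bad]; auto.
  exfalso. assert (rK h q ^ 2 > (Rabs (fst q - 1/2) + snd q) ^ 2) by nra.
  lra.
Qed.

Lemma sing_est q : Dlow q -> Rabs (fst q - 1/2) < 1/30 -> Rabs (snd q - 0) < 1/30 ->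
  Rabs (fst (Psi_low h h1 delta q) - 1/2) <= Rabs (fst q - 1/2) + snd q /\
  Rabs (snd (Psi_low h h1 delta q) - 0) <= Rabs (fst q - 1/2) + snd q.
Proof.
  intros Dq A B. pose proof (Rabs_pos (fst q - 1/2)). destruct Dq as [Q1 Q2].
  destruct (classic (fst q = 1/2 /\ snd q = 0)) as [Eq|Nq].
  - assert (Eq' : Psi_low h h1 delta q = (1/2, 0)).
    { unfold Psi_low. destruct (Req_EM_T (fst q) (1/2)); [|lra]. destruct (Req_EM_T (snd q) 0); [auto|lra]. }
    rewrite Eq'; simpl. split; [replace (1/2 - 1/2) with 0 by ring | replace (0-0) with 0 by ring]; rewrite Rabs_R0; lra.
  - assert (Dq' : Dstar q) by (split; [split|]; auto).
    destruct (small_rK q Dq' A B) as [h0 [r0' rle]].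
    rewrite (Psi_low_eq q Dq'). simpl. unfold P1, P2. rewrite h0.
    pose proof (SIN_bound (gK q * Theta h (rK h q))). pose proof (COS_bound (gK q * Theta h (rK h q))).
    set (s0 := sin (gK q * Theta h (rK h q))) in *. set (c0 := cos (gK q * Theta h (rK h q))) in *.
    set (rr := rK h q) in *. set (bb := Rabs (fst q - 1 / 2) + snd q) in *.
    split; apply Rabs_le; split; nra.
Qed.

Lemma Psi_low_sing p : Dlow p -> fst p = 1/2 -> snd p = 0 ->
  C2 Dlow (fun q => fst (Psi_low h h1 delta q)) p /\ C2 Dlow (fun q => snd (Psi_low h h1 delta q)) p.
Proof.
  intros Dp E1 E2.
  assert (Ep : Psi_low h h1 delta p = (1/2, 0)).
  { unfold Psi_low. destruct (Req_EM_T (fst p) (1/2)); [|lra]. destruct (Req_EM_T (snd p) 0); [auto|lra]. }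
  split; intros e He; exists (Rmin (1/30) (e/2)); (split; [apply Rmin_pos; lra|]);
    intros q Dq A B; rewrite E1, E2 in *; rewrite Ep; simpl;
    assert (d1 : Rmin (1/30) (e/2) <= 1/30) by apply Rmin_l;
    assert (d2 : Rmin (1/30) (e/2) <= e/2) by apply Rmin_r;
    destruct (sing_est q Dq ltac:(lra) ltac:(lra)) as [X Y];
    destruct Dq as [_ [Q2 _]]; rewrite Rminus_0_r, Rabs_right in B by lra; lra.
Qed.

Lemma Psi_low_cont p : Dlow p ->
  C2 Dlow (fun q => fst (Psi_low h h1 delta q)) p /\ C2 Dlow (fun q => snd (Psi_low h h1 delta q)) p.
Proof.
  intros Dp. destruct (classic (fst p = 1/2 /\ snd p = 0)) as [[E1 E2]|Np].
  - apply Psi_low_sing; auto.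
  - assert (Dp' : Dstar p) by (split; auto).
    split; (apply (C2_local Dlow Dstar); [apply Dlow_star_near; auto|]).
    + apply (C2_ext Dstar P1). intros q Dq. rewrite Psi_low_eq; auto.
      rewrite Psi_low_eq; auto. apply C2_P1; auto.
    + apply (C2_ext Dstar P2). intros q Dq. rewrite Psi_low_eq; auto.
      rewrite Psi_low_eq; auto. apply C2_P2; auto.
Qed.

End HS.


Lemma min_diff a b c d : Rabs (Rmin a b - Rmin c d) <= Rabs (a - c) + Rabs (b - d).
Proof.
  pose proof (Rle_abs (a - c)); pose proof (Rle_abs (c - a)); pose proof (Rle_abs (b - d)); pose proof (Rle_abs (d - b)).
  rewrite Rabs_minus_sym in H0. rewrite (Rabs_minus_sym d b) in H2.
  pose proof (Rabs_pos (a-c)); pose proof (Rabs_pos (b-d)).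
  unfold Rmin; destruct (Rle_dec a b); destruct (Rle_dec c d); apply Rabs_le; split; lra.
Qed.

Section HS.
Variables h h1 h2 h3 : R -> R.
Hypothesis H : h_hyp h h1 h2 h3.
Variable delta : R.
Hypothesis Hd : -1 < delta < 1.

Definition Lf v := v + delta * Rmin (v + 1/2) (1/2 - v).
Definition Lam t := t + delta * Rmin (t + 1) (1 - t).

Lemma Lam_L t : Lam t / 2 = Lf (t / 2).
Proof.
  unfold Lam, Lf. rewrite !Rmin_formula.
  replace (t + 1 - (1 - t)) with (2 * t) by ring.
  replace (t / 2 + 1 / 2 - (1 / 2 - t / 2)) with t by field.
  rewrite Rabs_mult, (Rabs_right 2) by lra. field.
Qed.

Lemma L_lip p q : Rabs (Lf p - Lf q) <= 3 * Rabs (p - q).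
Proof.
  unfold Lf. pose proof (min_diff (p + 1/2) (1/2 - p) (q + 1/2) (1/2 - q)).
  replace (p + 1/2 - (q + 1/2)) with (p - q) in H0 by ring.
  replace (1/2 - p - (1/2 - q)) with (- (p - q)) in H0 by ring. rewrite Rabs_Ropp in H0.
  replace (p + delta * Rmin (p + 1 / 2) (1 / 2 - p) - (q + delta * Rmin (q + 1 / 2) (1 / 2 - q)))
    with ((p - q) + delta * (Rmin (p + 1 / 2) (1 / 2 - p) - Rmin (q + 1 / 2) (1 / 2 - q))) by ring.
  eapply Rle_trans; [apply Rabs_triang|]. rewrite Rabs_mult.
  assert (Rabs delta <= 1) by (apply Rabs_le; lra).
  pose proof (Rabs_pos (Rmin (p + 1 / 2) (1 / 2 - p) - Rmin (q + 1 / 2) (1 / 2 - q))).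
  pose proof (Rabs_pos delta). nra.
Qed.

Section Core.
Variable r : R.
Hypothesis Hr : r0 h < r < 1/2.
Let R := r + h r.
Let T := Theta h r.
Let B := h1 r.

Lemma core_facts : 0 < r < 1/2 /\ 0 <= h r /\ 0 < T <= PI/2 /\ sin T = 1 / (2 * R) /\ 0 <= B /\ 1 < 2 * R.
Proof.
  pose proof (r0_bounds h h1 h2 h3 H).
  assert (r1 : 0 < r < 1/2) by lra.
  split; auto. split; [apply (h_nn h h1 h2 h3 H); lra|].
  split; [apply (Theta_bounds h h1 h2 h3 H); auto|].
  split. { unfold T, R. rewrite (Theta_sin_right h h1 h2 h3 H r Hr). f_equal. f_equal. ring. }
  split; [apply (h1_nn h h1 h2 h3 H); auto|].
  replace R with (h r + r) by (unfold R; ring). apply (right_R h h1 h2 h3 H); auto.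
Qed.

Lemma T_small : 1 <= R -> T <= 1 / R.
Proof.
  intros R1. destruct core_facts as [_ [_ [[T0 T1] [sT _]]]].
  pose proof PI_4.
  destruct (sin_cubic_pos T ltac:(pose proof PI_RGT_0; lra)) as [_ X].
  assert (sT' : sin T <= 1/2) by (rewrite sT; apply (Rmult_le_reg_r (2*R)); [lra|];
     unfold Rdiv; rewrite Rmult_1_l, Rinv_l by lra; lra).
  assert (T < 1).
  { destruct (Rlt_or_le T 1) as [ok|bad]; auto. exfalso.
    assert (0 <= (2 - T) * (T^2 + 2*T - 2)) by (apply Rmult_le_pos; nra).
    assert (T - T^3/6 - 2/3 = (2 - T) * (T^2 + 2*T - 2) / 6) by field. lra. }
  assert (S5 : 5/6 * T <= sin T) by nra.
  rewrite sT in S5. apply (Rmult_le_reg_r R); [lra|].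
  unfold Rdiv; rewrite Rmult_1_l, Rinv_l by lra.
  assert (E : 1 / (2 * R) * R = 1/2) by (field; lra). nra.
Qed.

Lemma sin_approx_t t : -1 <= t <= 1 -> Rabs (R * sin (t * T) - t / 2) <= R * T ^ 3 / 3.
Proof.
  intros Ht. destruct core_facts as [_ [_ [[T0 T1] [sT [_ R2]]]]].
  pose proof PI_RGT_0.
  assert (E : t / 2 = R * (t * sin T)) by (rewrite sT; field; lra).
  rewrite E. replace (R * sin (t * T) - R * (t * sin T)) with (R * ((sin (t*T) - t*T) + t * (T - sin T))) by ring.
  rewrite Rabs_mult, (Rabs_right R) by lra. unfold Rdiv. rewrite (Rmult_assoc R).
  apply Rmult_le_compat_l; [lra|].
  eapply Rle_trans; [apply Rabs_triang|].
  assert (A1 : Rabs (sin (t * T) - t * T) <= Rabs (t*T) ^ 3 / 6) by (apply sin_cubic; rewrite Rabs_mult, (Rabs_right T) by lra;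
     assert (Rabs t <= 1) by (apply Rabs_le; lra); nra).
  destruct (sin_cubic_pos T ltac:(lra)) as [A2 A3].
  rewrite Rabs_mult in *. rewrite (Rabs_right T) in * by lra.
  assert (At : Rabs t <= 1) by (apply Rabs_le; lra). pose proof (Rabs_pos t).
  rewrite (Rabs_right (T - sin T)) by lra.
  assert (t2 : Rabs t * Rabs t <= 1) by nra.
  assert (t3 : Rabs t ^ 3 <= 1) by (simpl; nra).
  assert (T3 : 0 <= T ^ 3) by (apply pow_le; lra).
  assert (X1 : (Rabs t * T) ^ 3 / 6 <= T ^ 3 / 6) by (rewrite Rpow_mult_distr; nra).
  assert (X2 : Rabs t * (T - sin T) <= T ^ 3 / 6) by nra.
  lra.
Qed.

Lemma W_approx a : -1 <= a <= 1 -> Rabs (Wf h h1 r a - (a + 1)) <= B * T ^ 2 / 3.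
Proof.
  intros Ha. destruct core_facts as [_ [_ [[T0 T1] [sT [B0 R2]]]]].
  pose proof PI_RGT_0.
  unfold Wf. fold T B.
  replace ((a + 1) * (1 + B) - B * (sin (a * T) + sin T) / T - (a + 1))
    with (B / T * ((a * T - sin (a * T)) + (T - sin T))) by (field; lra).
  rewrite Rabs_mult. rewrite (Rabs_right (B/T)) by (apply Rle_ge; apply Rmult_le_pos; [lra|left; apply Rinv_0_lt_compat; lra]).
  assert (A1 : Rabs (sin (a * T) - a * T) <= Rabs (a*T) ^ 3 / 6) by (apply sin_cubic; rewrite Rabs_mult, (Rabs_right T) by lra;
     assert (Rabs a <= 1) by (apply Rabs_le; lra); nra).
  destruct (sin_cubic_pos T ltac:(lra)) as [A2 A3].
  rewrite Rabs_mult, (Rabs_right T) in A1 by lra.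
  assert (At : Rabs a <= 1) by (apply Rabs_le; lra). pose proof (Rabs_pos a).
  assert (t2 : Rabs a * Rabs a <= 1) by nra.
  assert (t3 : Rabs a ^ 3 <= 1) by (simpl; nra).
  assert (T3 : 0 <= T ^ 3) by (apply pow_le; lra).
  assert (X1 : (Rabs a * T) ^ 3 / 6 <= T ^ 3 / 6) by (rewrite Rpow_mult_distr; nra).
  assert (S : Rabs (a * T - sin (a * T) + (T - sin T)) <= T ^ 3 / 3).
  { eapply Rle_trans; [apply Rabs_triang|]. rewrite Rabs_minus_sym. rewrite (Rabs_right (T - sin T)) by lra. lra. }
  assert (B / T * Rabs (a * T - sin (a * T) + (T - sin T)) <= B / T * (T ^ 3 / 3)).
  { apply Rmult_le_compat_l; auto. apply Rmult_le_pos; [lra|left; apply Rinv_0_lt_compat; lra]. }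
  replace (B * T ^ 2 / 3) with (B / T * (T ^ 3 / 3)) by (field; lra). auto.
Qed.

Lemma g_approx th : -1 <= th <= 1 ->
  Rabs (g h h1 delta r th - Lam th) <= 5 * (B * T ^ 2 / 3).
Proof.
  intros Ht. destruct core_facts as [r1 _].
  destruct (g_spec h h1 h2 h3 H delta Hd r th r1 Ht) as [G1 G2].
  set (gv := g h h1 delta r th) in *. set (E := B * T ^ 2 / 3).
  assert (Ag := W_approx gv G1). assert (At := W_approx th Ht). assert (A1 := W_approx 1 ltac:(lra)).
  fold E in Ag, At, A1.
  unfold Tf in G2. unfold Lam.
  set (Wt := Wf h h1 r th) in *. set (W1 := Wf h h1 r 1) in *.
  assert (M := min_diff Wt (W1 - Wt) (th + 1) (1 - th)).
  replace (W1 - Wt - (1 - th)) with ((W1 - (1+1)) - (Wt - (th + 1))) in M by ring.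
  assert (M2 : Rabs (W1 - (1 + 1) - (Wt - (th + 1))) <= E + E) by
    (eapply Rle_trans; [apply Rabs_triang|]; rewrite Rabs_Ropp; lra).
  assert (Dl : Rabs delta <= 1) by (apply Rabs_le; lra).
  set (m1 := Rmin Wt (W1 - Wt)) in *. set (m2 := Rmin (th + 1) (1 - th)) in *.
  replace (gv - (th + delta * m2)) with ((gv + 1 - Wf h h1 r gv) + (Wt - (th + 1)) + delta * (m1 - m2)) by (rewrite G2; ring).
  eapply Rle_trans; [apply Rabs_triang|]. eapply Rle_trans; [apply Rplus_le_compat_r; apply Rabs_triang|].
  rewrite Rabs_mult.
  replace (gv + 1 - Wf h h1 r gv) with (- (Wf h h1 r gv - (gv + 1))) by ring. rewrite Rabs_Ropp.
  assert (Rabs (m1 - m2) <= 3 * E) by lra.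
  pose proof (Rabs_pos delta). pose proof (Rabs_pos (m1 - m2)).
  assert (Rabs delta * Rabs (m1 - m2) <= 1 * (3 * E)) by (apply Rmult_le_compat; lra).
  lra.
Qed.

Lemma core_P1 y : Dstar y -> rK h y = r ->
  Rabs (P1 h h1 delta y - 1/2 - Lf (fst y - 1/2)) <= 4/3 * (R * T ^ 3) + 5/2 * (B * T ^ 2 / 3).
Proof.
  intros Dy Er. destruct (K_eqs h h1 h2 h3 H y Dy) as [E1 _]. rewrite Er in E1.
  pose proof (tK_range h h1 h2 h3 H y Dy) as Ht.
  unfold P1, gK. rewrite Er. fold R T.
  set (th := tK h y) in *. set (gv := g h h1 delta r th).
  assert (Gr : -1 <= gv <= 1) by (apply (g_spec h h1 h2 h3 H delta Hd); auto; apply core_facts).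
  assert (A1 := sin_approx_t gv Gr). assert (A2 := g_approx th Ht). fold gv in A2.
  assert (A3 := sin_approx_t th Ht).
  assert (Lth := Lam_L th).
  assert (Lp := L_lip (th/2) (fst y - 1/2)).
  replace (fst y - 1/2) with (R * sin (th * T)) in * by (unfold R, T; lra).
  replace (1 / 2 + R * sin (gv * T) - 1 / 2 - Lf (R * sin (th * T)))
    with ((R * sin (gv * T) - gv/2) + (gv - Lam th)/2 + (Lf (th/2) - Lf (R * sin (th * T)))) by (rewrite <- Lth; field).
  eapply Rle_trans; [apply Rabs_triang|]. eapply Rle_trans; [apply Rplus_le_compat_r; apply Rabs_triang|].
  unfold Rdiv at 2. rewrite Rabs_mult, (Rabs_right (/2)) by lra.
  rewrite Rabs_minus_sym in A3. lra.
Qed.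

Lemma core_P2 y : Dstar y -> rK h y = r -> r - 1 / (4 * R) <= P2 h h1 delta y <= r.
Proof.
  intros Dy Er. destruct core_facts as [r1 [hr [[T0 T1] [sT [B0 R2]]]]].
  pose proof PI_RGT_0.
  unfold P2, gK. rewrite Er. fold R T.
  set (gv := g h h1 delta r (tK h y)).
  assert (Gr : -1 <= gv <= 1) by (apply (g_spec h h1 h2 h3 H delta Hd); auto; apply (tK_range h h1 h2 h3 H); auto).
  assert (R0 : 0 < R) by lra.
  pose proof (COS_bound (gv * T)).
  assert (Rn : R - h r = r) by (unfold R; ring).
  split; [|nra].
  assert (cT : cos T <= cos (gv * T)).
  { set (z := gv * T).
    assert (zb : - T <= z <= T) by (unfold z; split; nra).
    destruct (Rle_or_lt 0 z).
    - destruct (Rle_lt_or_eq_dec z T) as [lt|eq]; [lra| |].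
      + left; apply cos_decreasing_1; lra.
      + rewrite eq; lra.
    - rewrite <- (cos_neg z). destruct (Rle_lt_or_eq_dec (- z) T) as [lt|eq]; [lra| |].
      + left; apply cos_decreasing_1; lra.
      + rewrite eq; lra. }
  assert (c0 : 0 <= cos T) by (apply cos_ge_0; lra).
  assert (c2 : cos T ^ 2 = 1 - sin T ^ 2) by (pose proof (sin2_cos2 T) as SC; unfold Rsqr in SC; nra).
  rewrite sT in c2.
  assert (RC2 : (R * cos T) ^ 2 = R ^ 2 - 1/4) by (rewrite Rpow_mult_distr, c2; field; lra).
  set (c' := R - 1 / (4 * R)).
  assert (c'0 : 0 <= c') by (unfold c'; apply (Rmult_le_reg_r (4 * R)); [lra|];
     rewrite Rmult_0_l; unfold Rdiv; rewrite Rmult_minus_distr_r, Rmult_assoc, Rinv_l by lra; nra).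
  assert (c'2 : c' ^ 2 <= R ^ 2 - 1/4).
  { unfold c'. replace ((R - 1 / (4 * R)) ^ 2) with (R^2 - 1/2 + 1/(16 * R^2)) by (field; lra).
    assert (1 / (16 * R ^ 2) <= 1/4).
    { apply (Rmult_le_reg_r (16 * R^2)); [nra|]. unfold Rdiv; rewrite Rmult_1_l, Rinv_l by nra. nra. }
    lra. }
  assert (RcT : c' <= R * cos T).
  { destruct (Rle_or_lt c' (R * cos T)) as [ok|bad]; auto. exfalso.
    assert (0 <= R * cos T) by (apply Rmult_le_pos; lra).
    assert (0 < (c' - R*cos T) * (c' + R*cos T)) by (apply Rmult_lt_0_compat; lra).
    assert ((R * cos T) ^ 2 < c' ^ 2) by nra. lra. }
  unfold c' in RcT. nra.
Qed.

End Core.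
End HS.


Section HS.
Variables h h1 h2 h3 : R -> R.
Hypothesis H : h_hyp h h1 h2 h3.
Variable delta : R.
Hypothesis Hd : -1 < delta < 1.

Lemma near_line eta : 0 < eta -> exists rho, 0 < rho /\ forall y, Dlow y -> 1/2 - rho < snd y ->
  Rabs (fst (Psi_low h h1 delta y) - 1/2 - Lf delta (fst y - 1/2)) <= eta /\
  Rabs (snd (Psi_low h h1 delta y) - 1/2) <= eta.
Proof.
  intros He. destruct (h_bound h h1 h2 h3 H) as [C [C0 HC]].
  set (M := 1 + 4 / eta + 4 * C / eta ^ 2).
  assert (M1 : 1 <= M) by (unfold M; assert (0 <= 4/eta) by (apply Rlt_le, Rdiv_lt_0_compat; lra);
     assert (0 <= 4 * C / eta ^ 2) by (apply Rmult_le_pos; [lra|left; apply Rinv_0_lt_compat; apply pow_lt; lra]); lra).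
  assert (M2 : 4 / eta <= M) by (unfold M; assert (0 <= 4 * C / eta ^ 2) by (apply Rmult_le_pos; [lra|left; apply Rinv_0_lt_compat; apply pow_lt; lra]); lra).
  assert (M3 : 4 * C / eta ^ 2 <= M) by (unfold M; assert (0 <= 4/eta) by (apply Rlt_le, Rdiv_lt_0_compat; lra); lra).
  destruct (h_inf h h1 h2 h3 H M) as [e [He' Hinf]].
  pose proof (r0_bounds h h1 h2 h3 H) as R0.
  exists (Rmin e (Rmin (eta/2) (1/2 - r0 h))). split.
  { repeat apply Rmin_pos; lra. }
  intros y Dy Hy.
  assert (m1 : Rmin e (Rmin (eta/2) (1/2 - r0 h)) <= e) by apply Rmin_l.
  assert (m2 : Rmin e (Rmin (eta/2) (1/2 - r0 h)) <= eta/2) by (eapply Rle_trans; [apply Rmin_r|apply Rmin_l]).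
  assert (m3 : Rmin e (Rmin (eta/2) (1/2 - r0 h)) <= 1/2 - r0 h) by (eapply Rle_trans; [apply Rmin_r|apply Rmin_r]).
  set (rho := Rmin e (Rmin (eta/2) (1/2 - r0 h))) in *.
  destruct Dy as [Y1 Y2].
  assert (Ds : Dstar y) by (split; [split; auto|]; intros [_ E]; lra).
  assert (hy : M < h (snd y)) by (apply Hinf; lra).
  set (r := rK h y).
  assert (rr : 0 < r < 1/2) by (apply (rK_range h h1 h2 h3 H); auto).
  assert (ry : snd y <= r) by (apply (rK_ge h h1 h2 h3 H); auto).
  assert (hr : h (snd y) <= h r) by (apply (h_mono h h1 h2 h3 H); lra).
  assert (Hr : r0 h < r < 1/2) by lra.
  destruct (core_facts h h1 h2 h3 H r Hr) as [_ [hr0 [[T0 T1] [sT [B0 R2]]]]].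
  set (Rq := r + h r) in *. set (T := Theta h r) in *. set (B := h1 r) in *.
  assert (RM : M < Rq) by (unfold Rq; lra).
  assert (TR := T_small h h1 h2 h3 H delta Hd r Hr ltac:(fold Rq; lra)). fold Rq T in TR.
  set (iR := 1 / Rq) in *.
  assert (iRR : iR * Rq = 1) by (unfold iR; field; lra).
  assert (iR0 : 0 < iR) by (unfold iR; apply Rdiv_lt_0_compat; lra).
  assert (iRM : iR * M <= 1) by (assert (iR * M <= iR * Rq) by (apply Rmult_le_compat_l; lra); lra).
  assert (iR1 : iR <= 1) by nra.
  assert (iRe : iR <= eta / 4).
  { assert (iR * (4/eta) <= 1) by nra.
    assert (E4 : iR * (4 / eta) = (iR * 4) / eta) by (field; lra). rewrite E4 in H0.
    apply (Rmult_le_reg_r 4); [lra|]. replace (eta / 4 * 4) with eta by field.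
    apply (Rmult_le_reg_r (/eta)); [apply Rinv_0_lt_compat; lra|]. rewrite Rinv_r by lra. lra. }
  assert (RT3 : Rq * T ^ 3 <= iR).
  { assert (T ^ 3 <= iR ^ 3) by (apply pow_incr; lra).
    assert (Rq * T ^ 3 <= Rq * iR ^ 3) by (apply Rmult_le_compat_l; lra).
    assert (Rq * iR ^ 3 = iR * iR) by (simpl; nra). nra. }
  assert (HB := HC r rr). fold B Rq in HB.
  set (E := B * T ^ 2 / 3).
  assert (E0 : 0 <= E) by (unfold E; apply Rmult_le_pos; [apply Rmult_le_pos; [lra|apply pow_le; lra]|lra]).
  assert (E2 : E ^ 2 <= C * iR / 9).
  { assert (T4 : T ^ 4 <= iR ^ 4) by (apply pow_incr; lra).
    assert (E ^ 2 = B ^ 2 * T ^ 4 / 9) by (unfold E; field).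
    assert (B ^ 2 * T ^ 4 <= C * Rq ^ 3 * iR ^ 4) by (apply Rmult_le_compat; try apply pow_le; try nra).
    assert (C * Rq ^ 3 * iR ^ 4 = C * iR) by (replace (iR ^ 4) with (iR * (iR * Rq) ^ 3 / Rq ^ 3) by (field; lra);
      rewrite iRR; field; lra).
    lra. }
  assert (CiR : C * iR <= eta ^ 2 / 4).
  { assert (C * iR <= (M * eta ^ 2 / 4) * iR).
    { apply Rmult_le_compat_r; [lra|].
      assert (4 * C / eta ^ 2 * (eta ^ 2 / 4) = C) by (field; lra).
      assert (0 < eta ^ 2 / 4) by (apply Rdiv_lt_0_compat; [apply pow_lt|]; lra). nra. }
    assert (M * eta ^ 2 / 4 * iR = (iR * M) * (eta ^ 2 / 4)) by (unfold Rdiv; ring).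
    assert (0 < eta ^ 2 / 4) by (apply Rdiv_lt_0_compat; [apply pow_lt|]; lra). nra. }
  assert (Ee : E <= eta / 6).
  { assert (E ^ 2 <= (eta / 6) ^ 2) by (replace ((eta/6)^2) with (eta^2/36) by field; lra).
    destruct (Rle_or_lt E (eta/6)) as [ok|bad]; auto. exfalso.
    assert ((eta/6)^2 < E^2) by (apply pow_lt_compat_l || nra). lra. }
  split.
  - assert (P := core_P1 h h1 h2 h3 H delta Hd r Hr y Ds eq_refl). fold Rq T B E in P.
    rewrite (Psi_low_eq h h1 delta y Ds). simpl. lra.
  - assert (P := core_P2 h h1 h2 h3 H delta Hd r Hr y Ds eq_refl). fold Rq in P.
    rewrite (Psi_low_eq h h1 delta y Ds). simpl.
    assert (1 / (4 * Rq) = iR / 4) by (unfold iR; field; lra).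
    apply Rabs_le; lra.
Qed.

End HS.


Lemma Psi_lt h h1 delta y1 y2 : y2 < 1/2 -> Psi h h1 delta (y1, y2) = Psi_low h h1 delta (y1, y2).
Proof. intros; unfold Psi. destruct (Rlt_dec y2 (1/2)); [auto|lra]. Qed.

Lemma Psi_gt h h1 delta y1 y2 : 1/2 < y2 -> Psi h h1 delta (y1, y2) =
  (fst (Psi_low h h1 delta (y1, 1 - y2)), 1 - snd (Psi_low h h1 delta (y1, 1 - y2))).
Proof. intros; unfold Psi. destruct (Rlt_dec y2 (1/2)); [lra|]. destruct (Rlt_dec (1/2) y2); [auto|lra]. Qed.

Lemma Psi_eq h h1 delta y1 : Psi h h1 delta (y1, 1/2) = (1/2 + Lf delta (y1 - 1/2), 1/2).
Proof.
  unfold Psi. destruct (Rlt_dec (1/2) (1/2)); [lra|]. destruct (Rlt_dec (1/2) (1/2)); [lra|].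
  unfold Lf. destruct (Rle_dec y1 (1/2)).
  - rewrite Rmin_left by lra. apply injective_projections; simpl; lra.
  - rewrite Rmin_right by lra. apply injective_projections; simpl; lra.
Qed.

Theorem lemma2p2 (h h1 h2 h3 : R -> R) (delta : R) :
  h_hyp h h1 h2 h3 -> -1 < delta < 1 ->
  continuous_on2 (Psi h h1 delta) in_square.
Proof.
  intros H Hd [x1 x2] [X1 X2] e He. simpl in X1, X2.
  destruct (Rlt_or_le x2 (1/2)) as [lt|ge].
  - assert (Dx : Dlow (x1, x2)) by (split; simpl; lra).
    destruct (Psi_low_cont h h1 h2 h3 H delta Hd _ Dx) as [C1 C2'].
    destruct (C1 e He) as [d1 [Hd1 A1]]. destruct (C2' e He) as [d2 [Hd2 A2]].
    exists (Rmin (Rmin d1 d2) (1/2 - x2)). split; [repeat apply Rmin_pos; lra|].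
    intros [y1 y2] [Y1 Y2] B1 B2. simpl in Y1, Y2, B1, B2.
    assert (m1 : Rmin (Rmin d1 d2) (1/2 - x2) <= d1) by (eapply Rle_trans; [apply Rmin_l|apply Rmin_l]).
    assert (m2 : Rmin (Rmin d1 d2) (1/2 - x2) <= d2) by (eapply Rle_trans; [apply Rmin_l|apply Rmin_r]).
    assert (m3 : Rmin (Rmin d1 d2) (1/2 - x2) <= 1/2 - x2) by apply Rmin_r.
    assert (yl : y2 < 1/2) by (apply Rabs_def2 in B2; lra).
    rewrite !Psi_lt by auto.
    assert (Dy : Dlow (y1, y2)) by (split; simpl; lra).
    split; [apply (A1 (y1,y2) Dy)|apply (A2 (y1,y2) Dy)]; simpl; lra.
  - destruct (Rle_lt_or_eq_dec _ _ ge) as [gt|eq].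
    + assert (Dx : Dlow (x1, 1 - x2)) by (split; simpl; lra).
      destruct (Psi_low_cont h h1 h2 h3 H delta Hd _ Dx) as [C1 C2'].
      destruct (C1 e He) as [d1 [Hd1 A1]]. destruct (C2' e He) as [d2 [Hd2 A2]].
      exists (Rmin (Rmin d1 d2) (x2 - 1/2)). split; [repeat apply Rmin_pos; lra|].
      intros [y1 y2] [Y1 Y2] B1 B2. simpl in Y1, Y2, B1, B2.
      assert (m1 : Rmin (Rmin d1 d2) (x2 - 1/2) <= d1) by (eapply Rle_trans; [apply Rmin_l|apply Rmin_l]).
      assert (m2 : Rmin (Rmin d1 d2) (x2 - 1/2) <= d2) by (eapply Rle_trans; [apply Rmin_l|apply Rmin_r]).
      assert (m3 : Rmin (Rmin d1 d2) (x2 - 1/2) <= x2 - 1/2) by apply Rmin_r.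
      assert (yl : 1/2 < y2) by (apply Rabs_def2 in B2; lra).
      rewrite !Psi_gt by auto. simpl.
      assert (Dy : Dlow (y1, 1 - y2)) by (split; simpl; lra).
      assert (B2' : Rabs ((1 - y2) - (1 - x2)) < Rmin (Rmin d1 d2) (x2 - 1/2)).
      { replace ((1 - y2) - (1 - x2)) with (- (y2 - x2)) by lra. rewrite Rabs_Ropp; auto. }
      split.
      * apply (A1 (y1, 1 - y2) Dy); simpl; lra.
      * replace (1 - snd (Psi_low h h1 delta (y1, 1 - y2)) - (1 - snd (Psi_low h h1 delta (x1, 1 - x2))))
          with (- (snd (Psi_low h h1 delta (y1, 1 - y2)) - snd (Psi_low h h1 delta (x1, 1 - x2)))) by lra.
        rewrite Rabs_Ropp. apply (A2 (y1, 1 - y2) Dy); simpl; lra.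
    + subst x2. destruct (near_line h h1 h2 h3 H delta Hd (e/2) ltac:(lra)) as [rho [Hrho NL]].
      exists (Rmin rho (e/6)). split; [apply Rmin_pos; lra|].
      assert (m1 : Rmin rho (e/6) <= rho) by apply Rmin_l.
      assert (m2 : Rmin rho (e/6) <= e/6) by apply Rmin_r.
      intros [y1 y2] [Y1 Y2] B1 B2. simpl in Y1, Y2, B1, B2.
      rewrite Psi_eq.
      assert (Lp := L_lip delta Hd (y1 - 1/2) (x1 - 1/2)).
      replace (y1 - 1/2 - (x1 - 1/2)) with (y1 - x1) in Lp by lra.
      apply Rabs_def2 in B2.
      destruct (Rlt_or_le y2 (1/2)) as [lt2|ge2].
      * rewrite Psi_lt by exact lt2. cbn [fst snd].
        assert (Dy : Dlow (y1, y2)) by (split; simpl; lra).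
        destruct (NL (y1, y2) Dy ltac:(simpl; lra)) as [N1 N2]. simpl in N1.
        split; [|lra].
        replace (fst (Psi_low h h1 delta (y1, y2)) - (1 / 2 + Lf delta (x1 - 1 / 2)))
          with ((fst (Psi_low h h1 delta (y1, y2)) - 1/2 - Lf delta (y1 - 1/2)) + (Lf delta (y1 - 1/2) - Lf delta (x1 - 1/2))) by lra.
        eapply Rle_lt_trans; [apply Rabs_triang|]. lra.
      * destruct (Rle_lt_or_eq_dec _ _ ge2) as [gt2|eq2].
        -- rewrite Psi_gt by exact gt2. cbn [fst snd].
           assert (Dy : Dlow (y1, 1 - y2)) by (split; simpl; lra).
           destruct (NL (y1, 1 - y2) Dy ltac:(simpl; lra)) as [N1 N2]. simpl in N1.
           split.
           ++ replace (fst (Psi_low h h1 delta (y1, 1 - y2)) - (1 / 2 + Lf delta (x1 - 1 / 2)))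
                with ((fst (Psi_low h h1 delta (y1, 1 - y2)) - 1/2 - Lf delta (y1 - 1/2)) + (Lf delta (y1 - 1/2) - Lf delta (x1 - 1/2))) by lra.
              eapply Rle_lt_trans; [apply Rabs_triang|]. lra.
           ++ replace (1 - snd (Psi_low h h1 delta (y1, 1 - y2)) - 1 / 2)
                with (- (snd (Psi_low h h1 delta (y1, 1 - y2)) - 1/2)) by lra.
              rewrite Rabs_Ropp. lra.
        -- subst y2. rewrite Psi_eq. cbn [fst snd]. split.
           ++ replace (1 / 2 + Lf delta (y1 - 1 / 2) - (1 / 2 + Lf delta (x1 - 1 / 2)))
                with (Lf delta (y1 - 1 / 2) - Lf delta (x1 - 1 / 2)) by lra. lra.
           ++ replace (1/2 - 1/2) with 0 by lra. rewrite Rabs_R0. lra.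
Qed.
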